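(* The functor $\mathbb{H}\colon 2\mathrm{Cat}\to\mathrm{DblCat}$ has a left adjoint $L\colon\mathrm{DblCat}\to 2\mathrm{Cat}$, and the adjunction $L\dashv\mathbb{H}$ is a Quillen pair, where $2\mathrm{Cat}$ carries the Lack model structure and $\mathrm{DblCat}$ carries the model structure right-induced along $(\mathbf{H},\mathcal{V})$ from two copies of the Lack model structure. Moreover, the counit $L\mathbb{H}\mathcal{A}\to\mathcal{A}$ is an isomorphism of 2-categories for every 2-category $\mathcal{A}$.
   Context: $\mathbb{H}\colon 2\mathrm{Cat}\to\mathrm{DblCat}$ sends a 2-category to the double category with the same objects, its morphisms as horizontal morphisms, only identity vertical morphisms, and its 2-cells as squares. $\mathbf{H}$ sends a double category to its underlying horizontal 2-category (objects, horizontal morphisms, squares with identity vertical boundaries as 2-cells). $\mathcal{V}\mathbb{A}$ is the 2-category with vertical morphisms of $\mathbb{A}$ as objects, squares as morphisms, and as 2-cells from $\alpha\colon(u\,{}^{a}_{b}\,v)$ to $\beta\colon(u\,{}^{c}_{d}\,v)$ pairs of squares with identity vertical boundaries $\sigma_0\colon a\Rightarrow c$, $\sigma_1\colon b\Rightarrow d$ with $\sigma_0$ on top of $\beta$ equal to $\alpha$ on top of $\sigma_1$. The Lack model structure on $2\mathrm{Cat}$ has biequivalences as weak equivalences and Lack fibrations as fibrations (2-functors $G$ for which equivalences $b\colon B\to GC$ lift to equivalences $a$ with $Ga=b$, and invertible 2-cells $\beta\colon b\cong Gc$ lift to invertible 2-cells $\alpha\colon a\cong c$ with $G\alpha=\beta$).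 The model structure on $\mathrm{DblCat}$ has as weak equivalences (resp.\ fibrations) the double functors $F$ with $\mathbf{H}F$ and $\mathcal{V}F$ biequivalences (resp.\ Lack fibrations). *)

(* Defs.v *)
(* Strict 2-categories and strict double categories are presented
   "non-dependently": each sort of cells is a type equipped with boundary
   maps, and composition operations are total functions whose values are only
   constrained (by the axioms) on composable arguments. *)
From Stdlib Require Import ClassicalEpsilon.
Set Implicit Arguments.
Unset Strict Implicit.

Record TwoCat : Type := {
  ob : Type; hom : Type; cell : Type;
  dom : hom -> ob; cod : hom -> ob;
  src : cell -> hom; tgt : cell -> hom;
  id1 : ob -> hom;
  comp1 : hom -> hom -> hom;                   (* comp1 f g = g o f (diagrammatic) *)
  id2 : hom -> cell;
  vcomp : cell -> cell -> cell;                (* vcomp x y : src x => tgt y *)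
  hcomp : cell -> cell -> cell }.              (* whiskering/horizontal composition, diagrammatic *)

Record is_twocat (C : TwoCat) : Prop := {
  tc_id1_dom : forall a : ob C, dom (id1 a) = a;
  tc_id1_cod : forall a : ob C, cod (id1 a) = a;
  tc_comp1_dom : forall f g : hom C, cod f = dom g -> dom (comp1 f g) = dom f;
  tc_comp1_cod : forall f g : hom C, cod f = dom g -> cod (comp1 f g) = cod g;
  tc_comp1_id_l : forall f : hom C, comp1 (id1 (dom f)) f = f;
  tc_comp1_id_r : forall f : hom C, comp1 f (id1 (cod f)) = f;
  tc_comp1_assoc : forall f g h : hom C, cod f = dom g -> cod g = dom h ->
      comp1 (comp1 f g) h = comp1 f (comp1 g h);
  tc_par_dom : forall x : cell C, dom (src x) = dom (tgt x);
  tc_par_cod : forall x : cell C, cod (src x) = cod (tgt x);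
  tc_id2_src : forall f : hom C, src (id2 f) = f;
  tc_id2_tgt : forall f : hom C, tgt (id2 f) = f;
  tc_vcomp_src : forall x y : cell C, tgt x = src y -> src (vcomp x y) = src x;
  tc_vcomp_tgt : forall x y : cell C, tgt x = src y -> tgt (vcomp x y) = tgt y;
  tc_vcomp_id_l : forall x : cell C, vcomp (id2 (src x)) x = x;
  tc_vcomp_id_r : forall x : cell C, vcomp x (id2 (tgt x)) = x;
  tc_vcomp_assoc : forall x y z : cell C, tgt x = src y -> tgt y = src z ->
      vcomp (vcomp x y) z = vcomp x (vcomp y z);
  tc_hcomp_src : forall x y : cell C, cod (src x) = dom (src y) ->
      src (hcomp x y) = comp1 (src x) (src y);
  tc_hcomp_tgt : forall x y : cell C, cod (src x) = dom (src y) ->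
      tgt (hcomp x y) = comp1 (tgt x) (tgt y);
  tc_hcomp_id_l : forall x : cell C, hcomp (id2 (id1 (dom (src x)))) x = x;
  tc_hcomp_id_r : forall x : cell C, hcomp x (id2 (id1 (cod (src x)))) = x;
  tc_hcomp_assoc : forall x y z : cell C, cod (src x) = dom (src y) ->
      cod (src y) = dom (src z) -> hcomp (hcomp x y) z = hcomp x (hcomp y z);
  tc_hcomp_id2 : forall f g : hom C, cod f = dom g ->
      hcomp (id2 f) (id2 g) = id2 (comp1 f g);
  tc_interchange : forall x y z w : cell C, tgt x = src y -> tgt z = src w ->
      cod (src x) = dom (src z) ->
      hcomp (vcomp x y) (vcomp z w) = vcomp (hcomp x z) (hcomp y w) }.

Record TwoFun (A B : TwoCat) : Type := {
  F_ob : ob A -> ob B; F_hom : hom A -> hom B; F_cell : cell A -> cell B }.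

Record is_twofun (A B : TwoCat) (F : TwoFun A B) : Prop := {
  tf_dom : forall f : hom A, dom (F_hom F f) = F_ob F (dom f);
  tf_cod : forall f : hom A, cod (F_hom F f) = F_ob F (cod f);
  tf_src : forall x : cell A, src (F_cell F x) = F_hom F (src x);
  tf_tgt : forall x : cell A, tgt (F_cell F x) = F_hom F (tgt x);
  tf_id1 : forall a : ob A, F_hom F (id1 a) = id1 (F_ob F a);
  tf_comp1 : forall f g : hom A, cod f = dom g ->
      F_hom F (comp1 f g) = comp1 (F_hom F f) (F_hom F g);
  tf_id2 : forall f : hom A, F_cell F (id2 f) = id2 (F_hom F f);
  tf_vcomp : forall x y : cell A, tgt x = src y ->
      F_cell F (vcomp x y) = vcomp (F_cell F x) (F_cell F y);
  tf_hcomp : forall x y : cell A, cod (src x) = dom (src y) ->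
      F_cell F (hcomp x y) = hcomp (F_cell F x) (F_cell F y) }.

Definition twofun_eq (A B : TwoCat) (F G : TwoFun A B) : Prop :=
  (forall a, F_ob F a = F_ob G a) /\ (forall f, F_hom F f = F_hom G f) /\
  (forall x, F_cell F x = F_cell G x).

Definition twocat_iso (A B : TwoCat) (F : TwoFun A B) : Prop :=
  exists G : TwoFun B A, is_twofun G /\
    (forall a, F_ob G (F_ob F a) = a) /\ (forall b, F_ob F (F_ob G b) = b) /\
    (forall f, F_hom G (F_hom F f) = f) /\ (forall g, F_hom F (F_hom G g) = g) /\
    (forall x, F_cell G (F_cell F x) = x) /\ (forall y, F_cell F (F_cell G y) = y).

Definition iso2 (C : TwoCat) (x : cell C) : Prop :=
  exists y : cell C, src y = tgt x /\ tgt y = src x /\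
    vcomp x y = id2 (src x) /\ vcomp y x = id2 (tgt x).

Definition is_equiv (C : TwoCat) (f : hom C) : Prop :=
  exists g : hom C, dom g = cod f /\ cod g = dom f /\
    (exists x : cell C, src x = comp1 f g /\ tgt x = id1 (dom f) /\ iso2 x) /\
    (exists y : cell C, src y = comp1 g f /\ tgt y = id1 (cod f) /\ iso2 y).

Definition biequiv (A B : TwoCat) (F : TwoFun A B) : Prop :=
  (forall b : ob B, exists (a : ob A) (e : hom B),
      dom e = F_ob F a /\ cod e = b /\ is_equiv e) /\
  (forall (a a' : ob A) (g : hom B), dom g = F_ob F a -> cod g = F_ob F a' ->
      exists (f : hom A) (x : cell B), dom f = a /\ cod f = a' /\
        src x = F_hom F f /\ tgt x = g /\ iso2 x) /\
  (forall (f f' : hom A) (y : cell B), dom f = dom f' -> cod f = cod f' ->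
      src y = F_hom F f -> tgt y = F_hom F f' ->
      exists x : cell A, (src x = f /\ tgt x = f' /\ F_cell F x = y) /\
        forall x' : cell A, src x' = f -> tgt x' = f' -> F_cell F x' = y -> x' = x).

Definition lack_fib (A C : TwoCat) (G : TwoFun A C) : Prop :=
  (forall (c : ob A) (b : hom C), cod b = F_ob G c -> is_equiv b ->
      exists a : hom A, cod a = c /\ is_equiv a /\ F_hom G a = b) /\
  (forall (c : hom A) (beta : cell C), tgt beta = F_hom G c -> iso2 beta ->
      exists alpha : cell A, tgt alpha = c /\ iso2 alpha /\ F_cell G alpha = beta).

Record DblCat : Type := {
  dob : Type; hhom : Type; vhom : Type; sq : Type;
  hdom : hhom -> dob; hcod : hhom -> dob;
  vdom : vhom -> dob; vcod : vhom -> dob;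
  top : sq -> hhom; bot : sq -> hhom; lft : sq -> vhom; rgt : sq -> vhom;
  hid : dob -> hhom; hcomp1 : hhom -> hhom -> hhom;
  vid : dob -> vhom; vcomp1 : vhom -> vhom -> vhom;
  sqidh : hhom -> sq;     (* identity square on a horizontal morphism (unit for sqv) *)
  sqidv : vhom -> sq;     (* identity square on a vertical morphism (unit for sqh) *)
  sqh : sq -> sq -> sq;   (* horizontal composition: x to the left of y *)
  sqv : sq -> sq -> sq }. (* vertical composition: x on top of y *)

Record is_dblcat (D : DblCat) : Prop := {
  dc_hid_dom : forall a : dob D, hdom (hid a) = a;
  dc_hid_cod : forall a : dob D, hcod (hid a) = a;
  dc_hcomp1_dom : forall f g : hhom D, hcod f = hdom g -> hdom (hcomp1 f g) = hdom f;
  dc_hcomp1_cod : forall f g : hhom D, hcod f = hdom g -> hcod (hcomp1 f g) = hcod g;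
  dc_hcomp1_id_l : forall f : hhom D, hcomp1 (hid (hdom f)) f = f;
  dc_hcomp1_id_r : forall f : hhom D, hcomp1 f (hid (hcod f)) = f;
  dc_hcomp1_assoc : forall f g h : hhom D, hcod f = hdom g -> hcod g = hdom h ->
      hcomp1 (hcomp1 f g) h = hcomp1 f (hcomp1 g h);
  dc_vid_dom : forall a : dob D, vdom (vid a) = a;
  dc_vid_cod : forall a : dob D, vcod (vid a) = a;
  dc_vcomp1_dom : forall u v : vhom D, vcod u = vdom v -> vdom (vcomp1 u v) = vdom u;
  dc_vcomp1_cod : forall u v : vhom D, vcod u = vdom v -> vcod (vcomp1 u v) = vcod v;
  dc_vcomp1_id_l : forall u : vhom D, vcomp1 (vid (vdom u)) u = u;
  dc_vcomp1_id_r : forall u : vhom D, vcomp1 u (vid (vcod u)) = u;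
  dc_vcomp1_assoc : forall u v w : vhom D, vcod u = vdom v -> vcod v = vdom w ->
      vcomp1 (vcomp1 u v) w = vcomp1 u (vcomp1 v w);
  dc_corner_tl : forall x : sq D, hdom (top x) = vdom (lft x);
  dc_corner_tr : forall x : sq D, hcod (top x) = vdom (rgt x);
  dc_corner_bl : forall x : sq D, hdom (bot x) = vcod (lft x);
  dc_corner_br : forall x : sq D, hcod (bot x) = vcod (rgt x);
  dc_sqidh_top : forall f : hhom D, top (sqidh f) = f;
  dc_sqidh_bot : forall f : hhom D, bot (sqidh f) = f;
  dc_sqidh_lft : forall f : hhom D, lft (sqidh f) = vid (hdom f);
  dc_sqidh_rgt : forall f : hhom D, rgt (sqidh f) = vid (hcod f);
  dc_sqidv_lft : forall u : vhom D, lft (sqidv u) = u;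
  dc_sqidv_rgt : forall u : vhom D, rgt (sqidv u) = u;
  dc_sqidv_top : forall u : vhom D, top (sqidv u) = hid (vdom u);
  dc_sqidv_bot : forall u : vhom D, bot (sqidv u) = hid (vcod u);
  dc_sqh_lft : forall x y : sq D, rgt x = lft y -> lft (sqh x y) = lft x;
  dc_sqh_rgt : forall x y : sq D, rgt x = lft y -> rgt (sqh x y) = rgt y;
  dc_sqh_top : forall x y : sq D, rgt x = lft y -> top (sqh x y) = hcomp1 (top x) (top y);
  dc_sqh_bot : forall x y : sq D, rgt x = lft y -> bot (sqh x y) = hcomp1 (bot x) (bot y);
  dc_sqv_top : forall x y : sq D, bot x = top y -> top (sqv x y) = top x;
  dc_sqv_bot : forall x y : sq D, bot x = top y -> bot (sqv x y) = bot y;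
  dc_sqv_lft : forall x y : sq D, bot x = top y -> lft (sqv x y) = vcomp1 (lft x) (lft y);
  dc_sqv_rgt : forall x y : sq D, bot x = top y -> rgt (sqv x y) = vcomp1 (rgt x) (rgt y);
  dc_sqh_id_l : forall x : sq D, sqh (sqidv (lft x)) x = x;
  dc_sqh_id_r : forall x : sq D, sqh x (sqidv (rgt x)) = x;
  dc_sqh_assoc : forall x y z : sq D, rgt x = lft y -> rgt y = lft z ->
      sqh (sqh x y) z = sqh x (sqh y z);
  dc_sqv_id_l : forall x : sq D, sqv (sqidh (top x)) x = x;
  dc_sqv_id_r : forall x : sq D, sqv x (sqidh (bot x)) = x;
  dc_sqv_assoc : forall x y z : sq D, bot x = top y -> bot y = top z ->
      sqv (sqv x y) z = sqv x (sqv y z);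
  dc_interchange : forall x y z w : sq D, rgt x = lft y -> rgt z = lft w ->
      bot x = top z -> bot y = top w ->
      sqv (sqh x y) (sqh z w) = sqh (sqv x z) (sqv y w);
  dc_sqh_sqidh : forall f g : hhom D, hcod f = hdom g ->
      sqh (sqidh f) (sqidh g) = sqidh (hcomp1 f g);
  dc_sqv_sqidv : forall u v : vhom D, vcod u = vdom v ->
      sqv (sqidv u) (sqidv v) = sqidv (vcomp1 u v);
  dc_sqidh_sqidv : forall a : dob D, sqidh (hid a) = sqidv (vid a) }.

Record DblFun (D E : DblCat) : Type := {
  G_ob : dob D -> dob E; G_hh : hhom D -> hhom E;
  G_vh : vhom D -> vhom E; G_sq : sq D -> sq E }.

Record is_dblfun (D E : DblCat) (G : DblFun D E) : Prop := {
  df_hdom : forall f, hdom (G_hh G f) = G_ob G (hdom f);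
  df_hcod : forall f, hcod (G_hh G f) = G_ob G (hcod f);
  df_vdom : forall u, vdom (G_vh G u) = G_ob G (vdom u);
  df_vcod : forall u, vcod (G_vh G u) = G_ob G (vcod u);
  df_top : forall x, top (G_sq G x) = G_hh G (top x);
  df_bot : forall x, bot (G_sq G x) = G_hh G (bot x);
  df_lft : forall x, lft (G_sq G x) = G_vh G (lft x);
  df_rgt : forall x, rgt (G_sq G x) = G_vh G (rgt x);
  df_hid : forall a, G_hh G (hid a) = hid (G_ob G a);
  df_vid : forall a, G_vh G (vid a) = vid (G_ob G a);
  df_hcomp1 : forall f g, hcod f = hdom g -> G_hh G (hcomp1 f g) = hcomp1 (G_hh G f) (G_hh G g);
  df_vcomp1 : forall u v, vcod u = vdom v -> G_vh G (vcomp1 u v) = vcomp1 (G_vh G u) (G_vh G v);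
  df_sqidh : forall f, G_sq G (sqidh f) = sqidh (G_hh G f);
  df_sqidv : forall u, G_sq G (sqidv u) = sqidv (G_vh G u);
  df_sqh : forall x y, rgt x = lft y -> G_sq G (sqh x y) = sqh (G_sq G x) (G_sq G y);
  df_sqv : forall x y, bot x = top y -> G_sq G (sqv x y) = sqv (G_sq G x) (G_sq G y) }.

Definition dblfun_eq (D E : DblCat) (F G : DblFun D E) : Prop :=
  (forall a, G_ob F a = G_ob G a) /\ (forall f, G_hh F f = G_hh G f) /\
  (forall u, G_vh F u = G_vh G u) /\ (forall x, G_sq F x = G_sq G x).

Definition dblfun_comp (D E F : DblCat) (G : DblFun E F) (H : DblFun D E) : DblFun D F :=
  {| G_ob a := G_ob G (G_ob H a); G_hh f := G_hh G (G_hh H f);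
     G_vh u := G_vh G (G_vh H u); G_sq x := G_sq G (G_sq H x) |}.

Definition dblfun_id (D : DblCat) : DblFun D D :=
  {| G_ob a := a; G_hh f := f; G_vh u := u; G_sq x := x |}.

(* vertical morphisms are indexed by objects: the only one on a is the identity *)
Definition HH (A : TwoCat) : DblCat :=
  {| dob := ob A; hhom := hom A; vhom := ob A; sq := cell A;
     hdom := @dom A; hcod := @cod A; vdom a := a; vcod a := a;
     top := @src A; bot := @tgt A;
     lft x := dom (src x); rgt x := cod (src x);
     hid := @id1 A; hcomp1 := @comp1 A;
     vid a := a; vcomp1 a _ := a;
     sqidh := @id2 A; sqidv a := id2 (id1 a);
     sqh := @hcomp A; sqv := @vcomp A |}.

Definition HHf (A B : TwoCat) (F : TwoFun A B) : DblFun (HH A) (HH B) :=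
  @Build_DblFun (HH A) (HH B) (F_ob F) (F_hom F) (F_ob F) (F_cell F).

(* choice-based restriction to a subtype, used for composites (which land in
   the subtype whenever the arguments are composable, by the axioms) *)
Definition restrict (X : Type) (P : X -> Prop) (x : X) (d : {y : X | P y}) : {y : X | P y} :=
  match excluded_middle_informative (P x) with
  | left p => exist P x p
  | right _ => d
  end.

Definition globular (D : DblCat) (x : sq D) : Prop :=
  lft x = vid (vdom (lft x)) /\ rgt x = vid (vdom (rgt x)).

Lemma globular_sqidh (D : DblCat) (HD : is_dblcat D) (f : hhom D) : globular (sqidh f).
Proof.
  unfold globular. rewrite (dc_sqidh_lft HD), (dc_sqidh_rgt HD), !(dc_vid_dom HD).
  split; reflexivity.
Qed.

Definition Hor_id2 (D : DblCat) (HD : is_dblcat D) (f : hhom D) : {x : sq D | globular x} :=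
  exist (@globular D) (sqidh f) (globular_sqidh HD f).

Definition Hor (D : DblCat) (HD : is_dblcat D) : TwoCat :=
  {| ob := dob D; hom := hhom D; cell := {x : sq D | globular x};
     dom := @hdom D; cod := @hcod D;
     src x := top (proj1_sig x); tgt x := bot (proj1_sig x);
     id1 := @hid D; comp1 := @hcomp1 D;
     id2 := Hor_id2 HD;
     vcomp x y := @restrict _ (@globular D) (sqv (proj1_sig x) (proj1_sig y)) x;
     hcomp x y := @restrict _ (@globular D) (sqh (proj1_sig x) (proj1_sig y)) x |}.

Definition Horf (D E : DblCat) (HD : is_dblcat D) (HE : is_dblcat E) (G : DblFun D E)
  : TwoFun (Hor HD) (Hor HE) :=
  @Build_TwoFun (Hor HD) (Hor HE) (G_ob G) (G_hh G)
     (fun x => @restrict _ (@globular E) (G_sq G (proj1_sig x))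
                   (Hor_id2 HE (G_hh G (top (proj1_sig x))))).

(* 2-cells of V D : (s0, s1) from the square a to the square b *)
Record VQ (D : DblCat) : Type := mkVQ { vs0 : sq D; vs1 : sq D; va : sq D; vb : sq D }.

Definition V2 (D : DblCat) (q : VQ D) : Prop :=
  lft (va q) = lft (vb q) /\ rgt (va q) = rgt (vb q) /\
  globular (vs0 q) /\ globular (vs1 q) /\
  top (vs0 q) = top (va q) /\ bot (vs0 q) = top (vb q) /\
  top (vs1 q) = bot (va q) /\ bot (vs1 q) = bot (vb q) /\
  sqv (vs0 q) (vb q) = sqv (va q) (vs1 q).

Lemma V2_id (D : DblCat) (HD : is_dblcat D) (a : sq D) :
  V2 (mkVQ (sqidh (top a)) (sqidh (bot a)) a a).
Proof.
  unfold V2; simpl.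
  repeat split; try apply globular_sqidh; try assumption;
    try apply (dc_sqidh_top HD); try apply (dc_sqidh_bot HD).
  rewrite (dc_sqv_id_l HD), (dc_sqv_id_r HD). reflexivity.
Qed.

Definition Ver_id2 (D : DblCat) (HD : is_dblcat D) (a : sq D) : {q : VQ D | V2 q} :=
  exist (@V2 D) (mkVQ (sqidh (top a)) (sqidh (bot a)) a a) (V2_id HD a).

Definition Ver (D : DblCat) (HD : is_dblcat D) : TwoCat :=
  {| ob := vhom D; hom := sq D; cell := {q : VQ D | V2 q};
     dom := @lft D; cod := @rgt D;
     src q := va (proj1_sig q); tgt q := vb (proj1_sig q);
     id1 := @sqidv D; comp1 := @sqh D;
     id2 := Ver_id2 HD;
     vcomp x y := @restrict _ (@V2 D)
        (mkVQ (sqv (vs0 (proj1_sig x)) (vs0 (proj1_sig y)))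
              (sqv (vs1 (proj1_sig x)) (vs1 (proj1_sig y)))
              (va (proj1_sig x)) (vb (proj1_sig y))) x;
     hcomp x y := @restrict _ (@V2 D)
        (mkVQ (sqh (vs0 (proj1_sig x)) (vs0 (proj1_sig y)))
              (sqh (vs1 (proj1_sig x)) (vs1 (proj1_sig y)))
              (sqh (va (proj1_sig x)) (va (proj1_sig y)))
              (sqh (vb (proj1_sig x)) (vb (proj1_sig y)))) x |}.

Definition Verf (D E : DblCat) (HD : is_dblcat D) (HE : is_dblcat E) (G : DblFun D E)
  : TwoFun (Ver HD) (Ver HE) :=
  @Build_TwoFun (Ver HD) (Ver HE) (G_vh G) (G_sq G)
     (fun q => @restrict _ (@V2 E)
        (mkVQ (G_sq G (vs0 (proj1_sig q))) (G_sq G (vs1 (proj1_sig q)))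
              (G_sq G (va (proj1_sig q))) (G_sq G (vb (proj1_sig q))))
        (Ver_id2 HE (G_sq G (va (proj1_sig q))))).

Definition dbl_we (D E : DblCat) (G : DblFun D E) : Prop :=
  forall (HD : is_dblcat D) (HE : is_dblcat E),
    biequiv (Horf HD HE G) /\ biequiv (Verf HD HE G).

Definition dbl_fib (D E : DblCat) (G : DblFun D E) : Prop :=
  forall (HD : is_dblcat D) (HE : is_dblcat E),
    lack_fib (Horf HD HE G) /\ lack_fib (Verf HD HE G).

(* Main.v *)
Require Import Defs.
From Stdlib Require Import ClassicalEpsilon FunctionalExtensionality PropExtensionality ProofIrrelevance.
Set Implicit Arguments.
Unset Strict Implicit.

Definition Q (X : Type) (R : X -> X -> Prop) : Type := {P : X -> Prop | exists x, R x x /\ P = R x}.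
Definition qrep (X : Type) (R : X -> X -> Prop) (q : Q R) : X :=
  proj1_sig (constructive_indefinite_description _ (proj2_sig q)).
Lemma qrep_spec (X : Type) (R : X -> X -> Prop) (q : Q R) :
  R (qrep q) (qrep q) /\ proj1_sig q = R (qrep q).
Proof. unfold qrep. destruct (constructive_indefinite_description _ _) as [x Hx]. exact Hx. Qed.
Definition qcl (X : Type) (R : X -> X -> Prop) (x : X) (H : R x x) : Q R :=
  exist _ (R x) (ex_intro _ x (conj H eq_refl)).
Definition qclD (X : Type) (R : X -> X -> Prop) (x : X) (d : Q R) : Q R :=
  match excluded_middle_informative (R x x) with left H => @qcl _ R x H | right _ => d end.
Lemma qclD_eq (X : Type) (R : X -> X -> Prop) x d (H : R x x) : qclD x d = @qcl _ R x H.
Proof. unfold qclD. destruct (excluded_middle_informative _) as [H'|n].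
  - f_equal. apply proof_irrelevance. - contradiction. Qed.

Section QL.
Variable X : Type.
Variable R : X -> X -> Prop.
Hypothesis Rsym : forall x y, R x y -> R y x.
Hypothesis Rtr : forall x y z, R x y -> R y z -> R x z.

Lemma Q_eq (p q : Q R) : proj1_sig p = proj1_sig q -> p = q.
Proof. destruct p, q; simpl; intros ->. f_equal. apply proof_irrelevance. Qed.

Lemma R_fun x y : R x y -> R x = R y.
Proof. intro H. apply functional_extensionality; intro z. apply propositional_extensionality.
  split; intro; eauto. Qed.

Lemma qcl_eq x y Hx Hy : R x y -> @qcl _ R x Hx = @qcl _ R y Hy.
Proof. intro H. apply Q_eq. simpl. apply R_fun; auto. Qed.

Lemma qcl_rep q H : @qcl _ R (qrep q) H = q.
Proof. apply Q_eq. simpl. symmetry. apply (qrep_spec q). Qed.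

Lemma qcl_inv x y Hx Hy : @qcl _ R x Hx = @qcl _ R y Hy -> R x y.
Proof. intro E. apply (f_equal (@proj1_sig _ _)) in E. simpl in E.
  rewrite E. exact Hy. Qed.

Lemma qrep_cl x H : R (qrep (@qcl _ R x H)) x.
Proof. destruct (qrep_spec (@qcl _ R x H)) as [H1 H2]. simpl in H2.
  rewrite <- H2. exact H. Qed.

Lemma q_ext (p q : Q R) : R (qrep p) (qrep q) -> p = q.
Proof. intro H. rewrite <- (@qcl_rep p (proj1 (qrep_spec p))), <- (@qcl_rep q (proj1 (qrep_spec q))).
  apply qcl_eq. exact H. Qed.
End QL.

Record Model (D : DblCat) : Type := mkModel {
  mB : TwoCat; mG : DblFun D (HH mB); mHB : is_twocat mB; mHG : is_dblfun mG }.

Definition gob (D : DblCat) (M : Model D) (a : dob D) : ob (mB M) := G_ob (mG M) a.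
Definition ghh (D : DblCat) (M : Model D) (f : hhom D) : hom (mB M) := G_hh (mG M) f.
Definition gvh (D : DblCat) (M : Model D) (u : vhom D) : ob (mB M) := G_vh (mG M) u.
Definition gsq (D : DblCat) (M : Model D) (x : sq D) : cell (mB M) := G_sq (mG M) x.

Section ModelFacts.
Variable D : DblCat.
Variable M : Model D.
Lemma m_hdom f : dom (ghh M f) = gob M (hdom f). Proof. intros; apply (df_hdom (mHG M)); auto. Qed.
Lemma m_hcod f : cod (ghh M f) = gob M (hcod f). Proof. intros; apply (df_hcod (mHG M)); auto. Qed.
Lemma m_vdom u : gvh M u = gob M (vdom u). Proof. intros; apply (df_vdom (mHG M)); auto. Qed.
Lemma m_vcod u : gvh M u = gob M (vcod u). Proof. intros; apply (df_vcod (mHG M)); auto. Qed.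
Lemma m_top x : src (gsq M x) = ghh M (top x). Proof. intros; apply (df_top (mHG M)); auto. Qed.
Lemma m_bot x : tgt (gsq M x) = ghh M (bot x). Proof. intros; apply (df_bot (mHG M)); auto. Qed.
Lemma m_lft x : dom (src (gsq M x)) = gvh M (lft x). Proof. intros; apply (df_lft (mHG M)); auto. Qed.
Lemma m_rgt x : cod (src (gsq M x)) = gvh M (rgt x). Proof. intros; apply (df_rgt (mHG M)); auto. Qed.
Lemma m_hid a : ghh M (hid a) = id1 (gob M a). Proof. intros; apply (df_hid (mHG M)); auto. Qed.
Lemma m_vid a : gvh M (vid a) = gob M a. Proof. intros; apply (df_vid (mHG M)); auto. Qed.
Lemma m_hcomp1 f g : hcod f = hdom g -> ghh M (hcomp1 f g) = comp1 (ghh M f) (ghh M g).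
Proof. intros; apply (df_hcomp1 (mHG M)); auto. Qed.
Lemma m_vcomp1 u v : vcod u = vdom v -> gvh M (vcomp1 u v) = gvh M u.
Proof. intros; apply (df_vcomp1 (mHG M)); auto. Qed.
Lemma m_sqidh f : gsq M (sqidh f) = id2 (ghh M f). Proof. intros; apply (df_sqidh (mHG M)); auto. Qed.
Lemma m_sqidv u : gsq M (sqidv u) = id2 (id1 (gvh M u)). Proof. intros; apply (df_sqidv (mHG M)); auto. Qed.
Lemma m_sqh x y : rgt x = lft y -> gsq M (sqh x y) = hcomp (gsq M x) (gsq M y).
Proof. intros; apply (df_sqh (mHG M)); auto. Qed.
Lemma m_sqv x y : bot x = top y -> gsq M (sqv x y) = vcomp (gsq M x) (gsq M y).
Proof. intros; apply (df_sqv (mHG M)); auto. Qed.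
End ModelFacts.

Section Free.
Variable D : DblCat.

Inductive T1 : Type := t_h (f : hhom D) | t_i (a : dob D) | t_c (t s : T1).
Inductive T2 : Type := t_s (x : sq D) | t_id (t : T1) | t_v (p q : T2) | t_hc (p q : T2).

Fixpoint dom1 (t : T1) : dob D := match t with t_h f => hdom f | t_i a => a | t_c t _ => dom1 t end.
Fixpoint cod1 (t : T1) : dob D := match t with t_h f => hcod f | t_i a => a | t_c _ s => cod1 s end.
Fixpoint src2 (p : T2) : T1 := match p with
  | t_s x => t_h (top x) | t_id t => t | t_v p _ => src2 p | t_hc p q => t_c (src2 p) (src2 q) end.
Fixpoint tgt2 (p : T2) : T1 := match p with
  | t_s x => t_h (bot x) | t_id t => t | t_v _ q => tgt2 q | t_hc p q => t_c (tgt2 p) (tgt2 q) end.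

Fixpoint I1 (M : Model D) (t : T1) : hom (mB M) := match t with
  | t_h f => ghh M f | t_i a => id1 (gob M a) | t_c t s => comp1 (I1 M t) (I1 M s) end.
Fixpoint I2 (M : Model D) (p : T2) : cell (mB M) := match p with
  | t_s x => gsq M x | t_id t => id2 (I1 M t)
  | t_v p q => vcomp (I2 M p) (I2 M q) | t_hc p q => hcomp (I2 M p) (I2 M q) end.

Definition R0 (a b : dob D) : Prop := forall M : Model D, gob M a = gob M b.
Fixpoint WT1 (t : T1) : Prop := match t with
  | t_c t s => WT1 t /\ WT1 s /\ R0 (cod1 t) (dom1 s) | _ => True end.
Definition R1 (t t' : T1) : Prop := WT1 t /\ WT1 t' /\ forall M, I1 M t = I1 M t'.

Lemma I1_dc M t : WT1 t -> dom (I1 M t) = gob M (dom1 t) /\ cod (I1 M t) = gob M (cod1 t).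
Proof.
  pose proof (mHB M) as HB.
  induction t as [f|a|t IHt s IHs]; simpl; intro W.
  - split; [apply m_hdom | apply m_hcod].
  - split; [apply (tc_id1_dom HB) | apply (tc_id1_cod HB)].
  - destruct W as [Wt [Ws E]]. destruct (IHt Wt) as [Dt Ct]. destruct (IHs Ws) as [Ds Cs].
    assert (cod (I1 M t) = dom (I1 M s)) as C by (rewrite Ct, Ds; apply E).
    split; [rewrite (tc_comp1_dom HB C); exact Dt | rewrite (tc_comp1_cod HB C); exact Cs].
Qed.

Fixpoint WT2 (p : T2) : Prop := match p with
  | t_s _ => True | t_id t => WT1 t
  | t_v p q => WT2 p /\ WT2 q /\ R1 (tgt2 p) (src2 q)
  | t_hc p q => WT2 p /\ WT2 q /\ R0 (cod1 (src2 p)) (dom1 (src2 q)) end.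
Definition R2 (p p' : T2) : Prop := WT2 p /\ WT2 p' /\ forall M, I2 M p = I2 M p'.

Lemma WT2_props p : WT2 p -> WT1 (src2 p) /\ WT1 (tgt2 p) /\
  forall M, src (I2 M p) = I1 M (src2 p) /\ tgt (I2 M p) = I1 M (tgt2 p).
Proof.
  induction p as [x|t|p IHp q IHq|p IHp q IHq]; simpl; intro W.
  - split; [exact I|split; [exact I|]]. intro M. split; [apply m_top|apply m_bot].
  - split; [exact W|split; [exact W|]]. intro M. split; [apply (tc_id2_src (mHB M))|apply (tc_id2_tgt (mHB M))].
  - destruct W as [Wp [Wq [_ [_ E]]]]. destruct (IHp Wp) as [S1 [T1' F1]]. destruct (IHq Wq) as [S2 [T2' F2]].
    split; [exact S1|split; [exact T2'|]]. intro M. pose proof (mHB M) as HB.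
    destruct (F1 M) as [a1 b1]. destruct (F2 M) as [a2 b2].
    assert (tgt (I2 M p) = src (I2 M q)) as C by (rewrite b1, a2; apply E).
    split; [rewrite (tc_vcomp_src HB C); exact a1 | rewrite (tc_vcomp_tgt HB C); exact b2].
  - destruct W as [Wp [Wq E]]. destruct (IHp Wp) as [S1 [T1' F1]]. destruct (IHq Wq) as [S2 [T2' F2]].
    split; [simpl; auto|split; [simpl; split; [exact T1'|split; [exact T2'|]]|]].
    + intro M. pose proof (mHB M) as HB. destruct (F1 M) as [a1 b1]. destruct (F2 M) as [a2 b2].
      rewrite <- (proj2 (I1_dc M T1')), <- (proj1 (I1_dc M T2')), <- b1, <- b2,
        <- (tc_par_cod HB), <- (tc_par_dom HB), a1, a2, (proj2 (I1_dc M S1)), (proj1 (I1_dc M S2)).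
      apply E.
    + intro M. pose proof (mHB M) as HB. destruct (F1 M) as [a1 b1]. destruct (F2 M) as [a2 b2].
      assert (cod (src (I2 M p)) = dom (src (I2 M q))) as C.
      { rewrite a1, a2, (proj2 (I1_dc M S1)), (proj1 (I1_dc M S2)). apply E. }
      split; [rewrite (tc_hcomp_src HB C), a1, a2; reflexivity
             |rewrite (tc_hcomp_tgt HB C), b1, b2; reflexivity].
Qed.

Lemma R0_refl a : R0 a a. Proof. intro; reflexivity. Qed.
Lemma R0_sym a b : R0 a b -> R0 b a. Proof. intros H M; auto. Qed.
Lemma R0_tr a b c : R0 a b -> R0 b c -> R0 a c. Proof. intros H K M; rewrite H; auto. Qed.
Lemma R1_refl t : WT1 t -> R1 t t. Proof. intro; repeat split; auto. Qed.
Lemma R1_sym a b : R1 a b -> R1 b a. Proof. intros [? [? H]]; repeat split; auto. Qed.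
Lemma R1_tr a b c : R1 a b -> R1 b c -> R1 a c.
Proof. intros [? [? H]] [? [? K]]; repeat split; auto. intro M; rewrite H; auto. Qed.
Lemma R2_refl t : WT2 t -> R2 t t. Proof. intro; repeat split; auto. Qed.
Lemma R2_sym a b : R2 a b -> R2 b a. Proof. intros [? [? H]]; repeat split; auto. Qed.
Lemma R2_tr a b c : R2 a b -> R2 b c -> R2 a c.
Proof. intros [? [? H]] [? [? K]]; repeat split; auto. intro M; rewrite H; auto. Qed.

Definition LO := Q R0.
Definition LH := Q R1.
Definition LC := Q R2.
Definition cl0 (a : dob D) : LO := @qcl _ R0 a (R0_refl a).

Lemma rep1_wt (f : LH) : WT1 (qrep f). Proof. exact (proj1 (proj1 (qrep_spec f))). Qed.
Lemma rep2_wt (x : LC) : WT2 (qrep x). Proof. exact (proj1 (proj1 (qrep_spec x))). Qed.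
Lemma src_ok (x : LC) : R1 (src2 (qrep x)) (src2 (qrep x)).
Proof. apply R1_refl. apply (WT2_props (rep2_wt x)). Qed.
Lemma tgt_ok (x : LC) : R1 (tgt2 (qrep x)) (tgt2 (qrep x)).
Proof. apply R1_refl. apply (WT2_props (rep2_wt x)). Qed.
Lemma ti_ok (a : dob D) : R1 (t_i a) (t_i a). Proof. apply R1_refl. exact I. Qed.
Lemma tid_ok (f : LH) : R2 (t_id (qrep f)) (t_id (qrep f)). Proof. apply R2_refl. apply rep1_wt. Qed.

Definition Ldom (f : LH) : LO := cl0 (dom1 (qrep f)).
Definition Lcod (f : LH) : LO := cl0 (cod1 (qrep f)).
Definition Lsrc (x : LC) : LH := @qcl _ R1 _ (src_ok x).
Definition Ltgt (x : LC) : LH := @qcl _ R1 _ (tgt_ok x).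
Definition Lid1 (a : LO) : LH := @qcl _ R1 _ (ti_ok (qrep a)).
Definition Lcomp1 (f g : LH) : LH := qclD (t_c (qrep f) (qrep g)) f.
Definition Lid2 (f : LH) : LC := @qcl _ R2 _ (tid_ok f).
Definition Lvcomp (x y : LC) : LC := qclD (t_v (qrep x) (qrep y)) x.
Definition Lhcomp (x y : LC) : LC := qclD (t_hc (qrep x) (qrep y)) x.

Definition LD : TwoCat :=
  {| ob := LO; hom := LH; cell := LC; dom := Ldom; cod := Lcod; src := Lsrc; tgt := Ltgt;
     id1 := Lid1; comp1 := Lcomp1; id2 := Lid2; vcomp := Lvcomp; hcomp := Lhcomp |}.

Definition I0c (M : Model D) (a : LO) : ob (mB M) := gob M (qrep a).
Definition I1c (M : Model D) (f : LH) : hom (mB M) := I1 M (qrep f).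
Definition I2c (M : Model D) (x : LC) : cell (mB M) := I2 M (qrep x).

Lemma I0c_cl M a H : I0c M (@qcl _ R0 a H) = gob M a.
Proof. unfold I0c. apply (qrep_cl H). Qed.
Lemma I0c_cl0 M a : I0c M (cl0 a) = gob M a. Proof. apply I0c_cl. Qed.
Lemma I1c_cl M t H : I1c M (@qcl _ R1 t H) = I1 M t.
Proof. unfold I1c. apply (qrep_cl H). Qed.
Lemma I2c_cl M t H : I2c M (@qcl _ R2 t H) = I2 M t.
Proof. unfold I2c. apply (qrep_cl H). Qed.

Lemma ext0 (a b : LO) : (forall M, I0c M a = I0c M b) -> a = b.
Proof. intro H. apply (q_ext R0_sym R0_tr). exact H. Qed.
Lemma ext1 (a b : LH) : (forall M, I1c M a = I1c M b) -> a = b.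
Proof. intro H. apply (q_ext R1_sym R1_tr). repeat split; [apply rep1_wt|apply rep1_wt|exact H]. Qed.
Lemma ext2 (a b : LC) : (forall M, I2c M a = I2c M b) -> a = b.
Proof. intro H. apply (q_ext R2_sym R2_tr). repeat split; [apply rep2_wt|apply rep2_wt|exact H]. Qed.

Lemma I_dom M f : I0c M (Ldom f) = dom (I1c M f).
Proof. unfold Ldom. rewrite I0c_cl0. symmetry. apply (I1_dc M (rep1_wt f)). Qed.
Lemma I_cod M f : I0c M (Lcod f) = cod (I1c M f).
Proof. unfold Lcod. rewrite I0c_cl0. symmetry. apply (I1_dc M (rep1_wt f)). Qed.
Lemma I_src M x : I1c M (Lsrc x) = src (I2c M x).
Proof. unfold Lsrc. rewrite I1c_cl. symmetry. apply (WT2_props (rep2_wt x)). Qed.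
Lemma I_tgt M x : I1c M (Ltgt x) = tgt (I2c M x).
Proof. unfold Ltgt. rewrite I1c_cl. symmetry. apply (WT2_props (rep2_wt x)). Qed.
Lemma I_id1 M a : I1c M (Lid1 a) = id1 (I0c M a).
Proof. unfold Lid1. rewrite I1c_cl. reflexivity. Qed.
Lemma I_id2 M f : I2c M (Lid2 f) = id2 (I1c M f).
Proof. unfold Lid2. rewrite I2c_cl. reflexivity. Qed.

Lemma comp_ok f g : Lcod f = Ldom g -> R1 (t_c (qrep f) (qrep g)) (t_c (qrep f) (qrep g)).
Proof. intro E. apply R1_refl. simpl. split; [apply rep1_wt|split; [apply rep1_wt|]].
  intro M. apply (f_equal (I0c M)) in E. unfold Ldom, Lcod in E. rewrite !I0c_cl0 in E. exact E. Qed.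
Lemma I_comp1 M f g : Lcod f = Ldom g -> I1c M (Lcomp1 f g) = comp1 (I1c M f) (I1c M g).
Proof. intro E. unfold Lcomp1. rewrite (qclD_eq _ (comp_ok E)), I1c_cl. reflexivity. Qed.

Lemma vcomp_ok x y : Ltgt x = Lsrc y -> R2 (t_v (qrep x) (qrep y)) (t_v (qrep x) (qrep y)).
Proof. intro E. apply R2_refl. simpl. split; [apply rep2_wt|split; [apply rep2_wt|]].
  apply qcl_inv in E. exact E. Qed.
Lemma I_vcomp M x y : Ltgt x = Lsrc y -> I2c M (Lvcomp x y) = vcomp (I2c M x) (I2c M y).
Proof. intro E. unfold Lvcomp. rewrite (qclD_eq _ (vcomp_ok E)), I2c_cl. reflexivity. Qed.

Lemma hcomp_ok x y : Lcod (Lsrc x) = Ldom (Lsrc y) ->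
  R2 (t_hc (qrep x) (qrep y)) (t_hc (qrep x) (qrep y)).
Proof. intro E. apply R2_refl. simpl. split; [apply rep2_wt|split; [apply rep2_wt|]].
  intro M. apply (f_equal (I0c M)) in E. rewrite I_cod, I_dom, !I_src in E.
  destruct (WT2_props (rep2_wt x)) as [Sx [_ Fx]]. destruct (WT2_props (rep2_wt y)) as [Sy [_ Fy]].
  unfold I2c in E. rewrite (proj1 (Fx M)), (proj1 (Fy M)) in E.
  rewrite (proj2 (I1_dc M Sx)), (proj1 (I1_dc M Sy)) in E. exact E. Qed.
Lemma I_hcomp M x y : Lcod (Lsrc x) = Ldom (Lsrc y) -> I2c M (Lhcomp x y) = hcomp (I2c M x) (I2c M y).
Proof. intro E. unfold Lhcomp. rewrite (qclD_eq _ (hcomp_ok E)), I2c_cl. reflexivity. Qed.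

Lemma sem_cd M f g : Lcod f = Ldom g -> cod (I1c M f) = dom (I1c M g).
Proof. intro E. rewrite <- I_cod, <- I_dom, E. reflexivity. Qed.
Lemma sem_ts M x y : Ltgt x = Lsrc y -> tgt (I2c M x) = src (I2c M y).
Proof. intro E. rewrite <- I_tgt, <- I_src, E. reflexivity. Qed.
Lemma sem_hh M x y : Lcod (Lsrc x) = Ldom (Lsrc y) -> cod (src (I2c M x)) = dom (src (I2c M y)).
Proof. intro E. rewrite <- !I_src, <- I_cod, <- I_dom, E. reflexivity. Qed.

End Free.

Section LTC.
Variable D : DblCat.
Notation LO := (LO D). Notation LH := (LH D). Notation LC := (LC D).

Ltac e0 := apply ext0; let M := fresh "M" in intro M; pose proof (mHB M) as HB.
Ltac e1 := apply ext1; let M := fresh "M" in intro M; pose proof (mHB M) as HB.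
Ltac e2 := apply ext2; let M := fresh "M" in intro M; pose proof (mHB M) as HB.

Lemma L_id1_dom (a : LO) : Ldom (Lid1 a) = a.
Proof. e0. rewrite I_dom, I_id1. apply (tc_id1_dom HB). Qed.
Lemma L_id1_cod (a : LO) : Lcod (Lid1 a) = a.
Proof. e0. rewrite I_cod, I_id1. apply (tc_id1_cod HB). Qed.
Lemma L_comp1_dom (f g : LH) : Lcod f = Ldom g -> Ldom (Lcomp1 f g) = Ldom f.
Proof. intro H. e0. rewrite !I_dom, (I_comp1 M H). apply (tc_comp1_dom HB (sem_cd M H)). Qed.
Lemma L_comp1_cod (f g : LH) : Lcod f = Ldom g -> Lcod (Lcomp1 f g) = Lcod g.
Proof. intro H. e0. rewrite !I_cod, (I_comp1 M H). apply (tc_comp1_cod HB (sem_cd M H)). Qed.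
Lemma L_comp1_id_l (f : LH) : Lcomp1 (Lid1 (Ldom f)) f = f.
Proof. assert (H : Lcod (Lid1 (Ldom f)) = Ldom f) by apply L_id1_cod.
  e1. rewrite (I_comp1 M H), I_id1, I_dom. apply (tc_comp1_id_l HB). Qed.
Lemma L_comp1_id_r (f : LH) : Lcomp1 f (Lid1 (Lcod f)) = f.
Proof. assert (H : Lcod f = Ldom (Lid1 (Lcod f))) by (symmetry; apply L_id1_dom).
  e1. rewrite (I_comp1 M H), I_id1, I_cod. apply (tc_comp1_id_r HB). Qed.
Lemma L_comp1_assoc (f g h : LH) : Lcod f = Ldom g -> Lcod g = Ldom h ->
  Lcomp1 (Lcomp1 f g) h = Lcomp1 f (Lcomp1 g h).
Proof. intros H1 H2.
  assert (H3 : Lcod (Lcomp1 f g) = Ldom h) by (rewrite L_comp1_cod; auto).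
  assert (H4 : Lcod f = Ldom (Lcomp1 g h)) by (rewrite L_comp1_dom; auto).
  e1. rewrite (I_comp1 M H3), (I_comp1 M H4), (I_comp1 M H1), (I_comp1 M H2).
  apply (tc_comp1_assoc HB (sem_cd M H1) (sem_cd M H2)). Qed.
Lemma L_par_dom (x : LC) : Ldom (Lsrc x) = Ldom (Ltgt x).
Proof. e0. rewrite !I_dom, I_src, I_tgt. apply (tc_par_dom HB). Qed.
Lemma L_par_cod (x : LC) : Lcod (Lsrc x) = Lcod (Ltgt x).
Proof. e0. rewrite !I_cod, I_src, I_tgt. apply (tc_par_cod HB). Qed.
Lemma L_id2_src (f : LH) : Lsrc (Lid2 f) = f.
Proof. e1. rewrite I_src, I_id2. apply (tc_id2_src HB). Qed.
Lemma L_id2_tgt (f : LH) : Ltgt (Lid2 f) = f.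
Proof. e1. rewrite I_tgt, I_id2. apply (tc_id2_tgt HB). Qed.
Lemma L_vcomp_src (x y : LC) : Ltgt x = Lsrc y -> Lsrc (Lvcomp x y) = Lsrc x.
Proof. intro H. e1. rewrite !I_src, (I_vcomp M H). apply (tc_vcomp_src HB (sem_ts M H)). Qed.
Lemma L_vcomp_tgt (x y : LC) : Ltgt x = Lsrc y -> Ltgt (Lvcomp x y) = Ltgt y.
Proof. intro H. e1. rewrite !I_tgt, (I_vcomp M H). apply (tc_vcomp_tgt HB (sem_ts M H)). Qed.
Lemma L_vcomp_id_l (x : LC) : Lvcomp (Lid2 (Lsrc x)) x = x.
Proof. assert (H : Ltgt (Lid2 (Lsrc x)) = Lsrc x) by apply L_id2_tgt.
  e2. rewrite (I_vcomp M H), I_id2, I_src. apply (tc_vcomp_id_l HB). Qed.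
Lemma L_vcomp_id_r (x : LC) : Lvcomp x (Lid2 (Ltgt x)) = x.
Proof. assert (H : Ltgt x = Lsrc (Lid2 (Ltgt x))) by (symmetry; apply L_id2_src).
  e2. rewrite (I_vcomp M H), I_id2, I_tgt. apply (tc_vcomp_id_r HB). Qed.
Lemma L_vcomp_assoc (x y z : LC) : Ltgt x = Lsrc y -> Ltgt y = Lsrc z ->
  Lvcomp (Lvcomp x y) z = Lvcomp x (Lvcomp y z).
Proof. intros H1 H2.
  assert (H3 : Ltgt (Lvcomp x y) = Lsrc z) by (rewrite L_vcomp_tgt; auto).
  assert (H4 : Ltgt x = Lsrc (Lvcomp y z)) by (rewrite L_vcomp_src; auto).
  e2. rewrite (I_vcomp M H3), (I_vcomp M H4), (I_vcomp M H1), (I_vcomp M H2).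
  apply (tc_vcomp_assoc HB (sem_ts M H1) (sem_ts M H2)). Qed.
Lemma L_hcomp_src (x y : LC) : Lcod (Lsrc x) = Ldom (Lsrc y) ->
  Lsrc (Lhcomp x y) = Lcomp1 (Lsrc x) (Lsrc y).
Proof. intro H. e1. rewrite I_src, (I_hcomp M H), (I_comp1 M H), !I_src.
  apply (tc_hcomp_src HB (sem_hh M H)). Qed.
Lemma L_hcomp_tgt (x y : LC) : Lcod (Lsrc x) = Ldom (Lsrc y) ->
  Ltgt (Lhcomp x y) = Lcomp1 (Ltgt x) (Ltgt y).
Proof. intro H.
  assert (H' : Lcod (Ltgt x) = Ldom (Ltgt y)) by (rewrite <- L_par_cod, <- L_par_dom; auto).
  e1. rewrite I_tgt, (I_hcomp M H), (I_comp1 M H'), !I_tgt.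
  apply (tc_hcomp_tgt HB (sem_hh M H)). Qed.
Lemma L_hcomp_id_l (x : LC) : Lhcomp (Lid2 (Lid1 (Ldom (Lsrc x)))) x = x.
Proof.
  assert (H : Lcod (Lsrc (Lid2 (Lid1 (Ldom (Lsrc x))))) = Ldom (Lsrc x))
    by (rewrite L_id2_src; apply L_id1_cod).
  e2. rewrite (I_hcomp M H), I_id2, I_id1, I_dom, I_src. apply (tc_hcomp_id_l HB). Qed.
Lemma L_hcomp_id_r (x : LC) : Lhcomp x (Lid2 (Lid1 (Lcod (Lsrc x)))) = x.
Proof.
  assert (H : Lcod (Lsrc x) = Ldom (Lsrc (Lid2 (Lid1 (Lcod (Lsrc x))))))
    by (rewrite L_id2_src; symmetry; apply L_id1_dom).
  e2. rewrite (I_hcomp M H), I_id2, I_id1, I_cod, I_src. apply (tc_hcomp_id_r HB). Qed.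
Lemma L_hcomp_assoc (x y z : LC) : Lcod (Lsrc x) = Ldom (Lsrc y) ->
  Lcod (Lsrc y) = Ldom (Lsrc z) -> Lhcomp (Lhcomp x y) z = Lhcomp x (Lhcomp y z).
Proof. intros H1 H2.
  assert (H3 : Lcod (Lsrc (Lhcomp x y)) = Ldom (Lsrc z))
    by (rewrite L_hcomp_src, L_comp1_cod; auto).
  assert (H4 : Lcod (Lsrc x) = Ldom (Lsrc (Lhcomp y z)))
    by (rewrite L_hcomp_src, L_comp1_dom; auto).
  e2. rewrite (I_hcomp M H3), (I_hcomp M H4), (I_hcomp M H1), (I_hcomp M H2).
  apply (tc_hcomp_assoc HB (sem_hh M H1) (sem_hh M H2)). Qed.
Lemma L_hcomp_id2 (f g : LH) : Lcod f = Ldom g -> Lhcomp (Lid2 f) (Lid2 g) = Lid2 (Lcomp1 f g).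
Proof. intro H.
  assert (H' : Lcod (Lsrc (Lid2 f)) = Ldom (Lsrc (Lid2 g))) by (rewrite !L_id2_src; auto).
  e2. rewrite (I_hcomp M H'), !I_id2, (I_comp1 M H). apply (tc_hcomp_id2 HB (sem_cd M H)). Qed.
Lemma L_interchange (x y z w : LC) : Ltgt x = Lsrc y -> Ltgt z = Lsrc w ->
  Lcod (Lsrc x) = Ldom (Lsrc z) ->
  Lhcomp (Lvcomp x y) (Lvcomp z w) = Lvcomp (Lhcomp x z) (Lhcomp y w).
Proof. intros H1 H2 H3.
  assert (H4 : Lcod (Lsrc (Lvcomp x y)) = Ldom (Lsrc (Lvcomp z w)))
    by (rewrite !L_vcomp_src; auto).
  assert (H5 : Lcod (Lsrc y) = Ldom (Lsrc w)).
  { rewrite <- H1, <- H2, <- L_par_cod, <- L_par_dom. auto. }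
  assert (H6 : Ltgt (Lhcomp x z) = Lsrc (Lhcomp y w))
    by (rewrite L_hcomp_tgt, L_hcomp_src, H1, H2; auto).
  e2. rewrite (I_hcomp M H4), (I_vcomp M H1), (I_vcomp M H2), (I_vcomp M H6),
    (I_hcomp M H3), (I_hcomp M H5).
  apply (tc_interchange HB (sem_ts M H1) (sem_ts M H2) (sem_hh M H3)). Qed.

Lemma LD_twocat : is_twocat (LD D).
Proof.
  constructor; simpl.
  exact L_id1_dom. exact L_id1_cod. exact L_comp1_dom. exact L_comp1_cod.
  exact L_comp1_id_l. exact L_comp1_id_r. exact L_comp1_assoc. exact L_par_dom. exact L_par_cod.
  exact L_id2_src. exact L_id2_tgt. exact L_vcomp_src. exact L_vcomp_tgt.
  exact L_vcomp_id_l. exact L_vcomp_id_r. exact L_vcomp_assoc. exact L_hcomp_src.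
  exact L_hcomp_tgt. exact L_hcomp_id_l. exact L_hcomp_id_r. exact L_hcomp_assoc.
  exact L_hcomp_id2. exact L_interchange.
Qed.
End LTC.

Section Eta.
Variable D : DblCat.
Lemma th_ok (f : hhom D) : R1 (t_h f) (t_h f). Proof. apply R1_refl. exact I. Qed.
Lemma ts_ok (x : sq D) : R2 (t_s x) (t_s x). Proof. apply R2_refl. exact I. Qed.
Definition eh (f : hhom D) : LH D := @qcl _ (@R1 D) _ (th_ok f).
Definition es (x : sq D) : LC D := @qcl _ (@R2 D) _ (ts_ok x).
Definition etaD : DblFun D (HH (LD D)) :=
  @Build_DblFun D (HH (LD D)) (fun a => cl0 a) eh (fun u => cl0 (vdom u)) es.

Ltac e0 := apply ext0; let M := fresh "M" in intro M; pose proof (mHB M) as HB.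
Ltac e1 := apply ext1; let M := fresh "M" in intro M; pose proof (mHB M) as HB.
Ltac e2 := apply ext2; let M := fresh "M" in intro M; pose proof (mHB M) as HB.

Lemma I_eh M f : I1c M (eh f) = ghh M f. Proof. unfold eh. rewrite I1c_cl. reflexivity. Qed.
Lemma I_es M x : I2c M (es x) = gsq M x. Proof. unfold es. rewrite I2c_cl. reflexivity. Qed.

Lemma eh_dom f : Ldom (eh f) = cl0 (hdom f).
Proof. e0. rewrite I_dom, I_eh, I0c_cl0. apply m_hdom. Qed.
Lemma eh_cod f : Lcod (eh f) = cl0 (hcod f).
Proof. e0. rewrite I_cod, I_eh, I0c_cl0. apply m_hcod. Qed.
Lemma es_src x : Lsrc (es x) = eh (top x).
Proof. e1. rewrite I_src, I_es, I_eh. apply m_top. Qed.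
Lemma es_tgt x : Ltgt (es x) = eh (bot x).
Proof. e1. rewrite I_tgt, I_es, I_eh. apply m_bot. Qed.
Lemma es_lft x : Ldom (Lsrc (es x)) = cl0 (vdom (lft x)).
Proof. e0. rewrite I_dom, I_src, I_es, I0c_cl0, m_lft. apply m_vdom. Qed.
Lemma es_rgt x : Lcod (Lsrc (es x)) = cl0 (vdom (rgt x)).
Proof. e0. rewrite I_cod, I_src, I_es, I0c_cl0, m_rgt. apply m_vdom. Qed.

Lemma etaD_dblfun : is_dblfun etaD.
Proof.
  constructor; simpl.
  - exact eh_dom.
  - exact eh_cod.
  - reflexivity.
  - intro u. e0. rewrite !I0c_cl0, <- m_vdom. apply m_vcod.
  - exact es_src.
  - exact es_tgt.
  - exact es_lft.
  - exact es_rgt.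
  - intro a. e1. rewrite I_eh, I_id1, I0c_cl0. apply m_hid.
  - intro a. e0. rewrite !I0c_cl0, <- m_vdom. apply m_vid.
  - intros f g H. assert (E : Lcod (eh f) = Ldom (eh g)) by (rewrite eh_dom, eh_cod, H; reflexivity).
    e1. rewrite (I_comp1 M E), !I_eh. apply (m_hcomp1 M H).
  - intros u v H. e0. rewrite !I0c_cl0, <- !m_vdom. apply (m_vcomp1 M H).
  - intro f. e2. rewrite I_id2, I_es, I_eh. apply m_sqidh.
  - intro u. e2. rewrite I_id2, I_es, I_id1, I0c_cl0, <- m_vdom. apply m_sqidv.
  - intros x y H. assert (E : Lcod (Lsrc (es x)) = Ldom (Lsrc (es y)))
      by (rewrite es_lft, es_rgt, H; reflexivity).
    e2. rewrite (I_hcomp M E), !I_es. apply (m_sqh M H).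
  - intros x y H. assert (E : Ltgt (es x) = Lsrc (es y)) by (rewrite es_tgt, es_src, H; reflexivity).
    e2. rewrite (I_vcomp M E), !I_es. apply (m_sqv M H).
Qed.
End Eta.

Ltac e0 := apply ext0; let M := fresh "M" in intro M; pose proof (mHB M) as HB.
Ltac e1 := apply ext1; let M := fresh "M" in intro M; pose proof (mHB M) as HB.
Ltac e2 := apply ext2; let M := fresh "M" in intro M; pose proof (mHB M) as HB.

Section Univ.
Variable D : DblCat.
Variable B : TwoCat.
Variable G : DblFun D (HH B).
Hypothesis HB0 : is_twocat B.
Hypothesis HG : is_dblfun G.
Definition M0 : Model D := @mkModel D B G HB0 HG.
Definition Gp : TwoFun (LD D) B := @Build_TwoFun (LD D) B (I0c M0) (I1c M0) (I2c M0).

Lemma Gp_twofun : is_twofun Gp.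
Proof.
  constructor; simpl.
  - intro f. symmetry. exact (I_dom M0 f).
  - intro f. symmetry. exact (I_cod M0 f).
  - intro x. symmetry. exact (I_src M0 x).
  - intro x. symmetry. exact (I_tgt M0 x).
  - intro a. exact (I_id1 M0 a).
  - intros f g H. apply (I_comp1 M0 H).
  - intro f. exact (I_id2 M0 f).
  - intros x y H. apply (I_vcomp M0 H).
  - intros x y H. apply (I_hcomp M0 H).
Qed.

Lemma Gp_eq : dblfun_eq (dblfun_comp (HHf Gp) (etaD D)) G.
Proof.
  split; [|split; [|split]]; simpl.
  - intro a. rewrite I0c_cl0. reflexivity.
  - intro f. rewrite I_eh. reflexivity.
  - intro u. rewrite I0c_cl0. symmetry. apply (m_vdom M0).
  - intro x. rewrite I_es. reflexivity.
Qed.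

Variable G2 : TwoFun (LD D) B.
Hypothesis HG2 : is_twofun G2.
Hypothesis Heq : dblfun_eq (dblfun_comp (HHf G2) (etaD D)) G.

Lemma U0 a : F_ob G2 (cl0 a) = gob M0 a.
Proof. destruct Heq as [E _]. apply E. Qed.

Lemma U1 t : forall H : R1 t t, F_hom G2 (@qcl _ (@R1 D) t H) = I1 M0 t.
Proof.
  induction t as [f|a|t IHt s IHs]; intro H.
  - destruct Heq as [_ [E _]]. rewrite (proof_irrelevance _ H (th_ok f)). apply (E f).
  - assert (E : @qcl _ (@R1 D) (t_i a) H = Lid1 (cl0 a)).
    { e1. rewrite I1c_cl, I_id1, I0c_cl0. reflexivity. }
    rewrite E. simpl. rewrite (tf_id1 HG2 (cl0 a) : F_hom G2 (Lid1 (cl0 a)) = id1 (F_ob G2 (cl0 a))).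
    rewrite U0. reflexivity.
  - pose proof H as [[Wt [Ws R]] _].
    set (Ht := R1_refl Wt). set (Hs := R1_refl Ws).
    assert (C : Lcod (@qcl _ (@R1 D) t Ht) = Ldom (@qcl _ (@R1 D) s Hs)).
    { e0. rewrite I_cod, I_dom, !I1c_cl, (proj2 (I1_dc M Wt)), (proj1 (I1_dc M Ws)). apply R. }
    assert (E : @qcl _ (@R1 D) (t_c t s) H = Lcomp1 (@qcl _ (@R1 D) t Ht) (@qcl _ (@R1 D) s Hs)).
    { e1. rewrite (I_comp1 M C), !I1c_cl. reflexivity. }
    rewrite E. pose proof (tf_comp1 HG2 (C : cod (t:=LD D) _ = dom (t:=LD D) _)) as K. simpl in K. rewrite K.
    simpl. rewrite IHt, IHs. reflexivity.
Qed.

Lemma U2 p : forall H : R2 p p, F_cell G2 (@qcl _ (@R2 D) p H) = I2 M0 p.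
Proof.
  induction p as [x|t|p IHp q IHq|p IHp q IHq]; intro H.
  - destruct Heq as [_ [_ [_ E]]]. rewrite (proof_irrelevance _ H (ts_ok x)). apply (E x).
  - pose proof H as [Wt _]. simpl in Wt. set (Ht := R1_refl Wt).
    assert (E : @qcl _ (@R2 D) (t_id t) H = Lid2 (@qcl _ (@R1 D) t Ht)).
    { e2. rewrite I2c_cl, I_id2, I1c_cl. reflexivity. }
    rewrite E. pose proof (tf_id2 HG2 (@qcl _ (@R1 D) t Ht : hom (LD D))) as K. simpl in K. rewrite K. simpl. rewrite U1. reflexivity.
  - pose proof H as [[Wp [Wq R]] _].
    set (Hp := R2_refl Wp). set (Hq := R2_refl Wq).
    assert (C : Ltgt (@qcl _ (@R2 D) p Hp) = Lsrc (@qcl _ (@R2 D) q Hq)).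
    { e1. rewrite I_tgt, I_src, !I2c_cl, (proj2 (proj2 (proj2 (WT2_props Wp)) M)),
        (proj1 (proj2 (proj2 (WT2_props Wq)) M)). apply R. }
    assert (E : @qcl _ (@R2 D) (t_v p q) H = Lvcomp (@qcl _ (@R2 D) p Hp) (@qcl _ (@R2 D) q Hq)).
    { e2. rewrite (I_vcomp M C), !I2c_cl. reflexivity. }
    rewrite E. pose proof (tf_vcomp HG2 (C : tgt (t:=LD D) _ = src (t:=LD D) _)) as K. simpl in K. rewrite K.
    simpl. rewrite IHp, IHq. reflexivity.
  - pose proof H as [[Wp [Wq R]] _].
    set (Hp := R2_refl Wp). set (Hq := R2_refl Wq).
    assert (C : Lcod (Lsrc (@qcl _ (@R2 D) p Hp)) = Ldom (Lsrc (@qcl _ (@R2 D) q Hq))).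
    { e0. rewrite I_cod, I_dom, !I_src, !I2c_cl.
      destruct (WT2_props Wp) as [Sp [_ Fp]]. destruct (WT2_props Wq) as [Sq [_ Fq]].
      rewrite (proj1 (Fp M)), (proj1 (Fq M)), (proj2 (I1_dc M Sp)), (proj1 (I1_dc M Sq)). apply R. }
    assert (E : @qcl _ (@R2 D) (t_hc p q) H = Lhcomp (@qcl _ (@R2 D) p Hp) (@qcl _ (@R2 D) q Hq)).
    { e2. rewrite (I_hcomp M C), !I2c_cl. reflexivity. }
    rewrite E. pose proof (tf_hcomp HG2 (C : cod (t:=LD D) (src _) = dom (t:=LD D) (src _))) as K. simpl in K. rewrite K.
    simpl. rewrite IHp, IHq. reflexivity.
Qed.

Lemma U_all : twofun_eq G2 Gp.
Proof.
  split; [|split]; simpl.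
  - intro a. rewrite <- (qcl_rep (proj1 (qrep_spec a))) at 1.
    unfold I0c. rewrite <- U0. f_equal. unfold cl0. f_equal. apply proof_irrelevance.
  - intro f. rewrite <- (qcl_rep (proj1 (qrep_spec f))) at 1. rewrite U1. reflexivity.
  - intro x. rewrite <- (qcl_rep (proj1 (qrep_spec x))) at 1. rewrite U2. reflexivity.
Qed.
End Univ.


Lemma id_dblfun (D : DblCat) : is_dblfun (dblfun_id D).
Proof. constructor; simpl; intros; reflexivity. Qed.

Section Counit.
Variable A : TwoCat.
Hypothesis HA : is_twocat A.
Definition Mid : Model (HH A) := @mkModel (HH A) A (dblfun_id (HH A)) HA (id_dblfun (HH A)).

Lemma CU1 (M : Model (HH A)) t : WT1 t -> ghh M (I1 Mid t) = I1 M t.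
Proof.
  induction t as [f|a|t IHt s IHs]; simpl; intro W.
  - reflexivity.
  - exact (m_hid M a).
  - destruct W as [Wt [Ws R]].
    transitivity (comp1 (ghh M (I1 Mid t)) (ghh M (I1 Mid s))); [|rewrite IHt, IHs; auto].
    apply (m_hcomp1 M (f := I1 Mid t) (g := I1 Mid s)).
    change (cod (t:=mB Mid) (I1 Mid t) = dom (t:=mB Mid) (I1 Mid s)). rewrite (proj2 (I1_dc Mid Wt)), (proj1 (I1_dc Mid Ws)). apply R.
Qed.

Lemma CU2 (M : Model (HH A)) p : WT2 p -> gsq M (I2 Mid p) = I2 M p.
Proof.
  induction p as [x|t|p IHp q IHq|p IHp q IHq]; simpl; intro W.
  - reflexivity.
  - transitivity (id2 (ghh M (I1 Mid t))); [apply (m_sqidh M (I1 Mid t))|]. f_equal. apply CU1; auto.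
  - destruct W as [Wp [Wq R]].
    transitivity (vcomp (gsq M (I2 Mid p)) (gsq M (I2 Mid q))); [|rewrite IHp, IHq; auto].
    apply (m_sqv M (x := I2 Mid p) (y := I2 Mid q)).
    change (tgt (t:=mB Mid) (I2 Mid p) = src (t:=mB Mid) (I2 Mid q)). rewrite (proj2 (proj2 (proj2 (WT2_props Wp)) Mid)),
        (proj1 (proj2 (proj2 (WT2_props Wq)) Mid)). apply R.
  - destruct W as [Wp [Wq R]].
    transitivity (hcomp (gsq M (I2 Mid p)) (gsq M (I2 Mid q))); [|rewrite IHp, IHq; auto].
    apply (m_sqh M (x := I2 Mid p) (y := I2 Mid q)).
    change (cod (t:=mB Mid) (src (I2 Mid p)) = dom (t:=mB Mid) (src (I2 Mid q))). destruct (WT2_props Wp) as [Sp [_ Fp]]. destruct (WT2_props Wq) as [Sq [_ Fq]].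
      rewrite (proj1 (Fp Mid)), (proj1 (Fq Mid)), (proj2 (I1_dc Mid Sp)), (proj1 (I1_dc Mid Sq)).
      apply R.
Qed.

Variable eps : TwoFun (LD (HH A)) A.
Hypothesis Heps : is_twofun eps.
Hypothesis Heq : dblfun_eq (dblfun_comp (HHf eps) (etaD (HH A))) (dblfun_id (HH A)).

Lemma counit_iso : twocat_iso eps.
Proof.
  pose proof (@U_all (HH A) A (dblfun_id (HH A)) HA (id_dblfun (HH A)) eps Heps Heq) as [E0 [E1 E2]].
  simpl in E0, E1, E2.
  pose proof (etaD_dblfun (HH A)) as HE.
  exists (@Build_TwoFun A (LD (HH A)) (fun a : dob (HH A) => cl0 a) (@eh (HH A)) (@es (HH A))).
  split; [|split; [|split; [|split; [|split; [|split]]]]]; simpl.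
  - constructor; simpl.
    + exact (df_hdom HE). + exact (df_hcod HE). + exact (df_top HE). + exact (df_bot HE).
    + exact (df_hid HE). + exact (df_hcomp1 HE). + exact (df_sqidh HE).
    + exact (df_sqv HE). + exact (df_sqh HE).
  - intro a. rewrite E0. unfold I0c. simpl. unfold gob. simpl.
    rewrite <- (qcl_rep (proj1 (qrep_spec a))) at 2. unfold cl0. f_equal. apply proof_irrelevance.
  - intro b. destruct Heq as [H _]. apply H.
  - intro g. rewrite E1. unfold I1c.
    rewrite <- (qcl_rep (proj1 (qrep_spec g))) at 2.
    e1. rewrite I_eh, I1c_cl. apply CU1. apply rep1_wt.
  - intro f. destruct Heq as [_ [H _]]. apply H.
  - intro x. rewrite E2. unfold I2c.
    rewrite <- (qcl_rep (proj1 (qrep_spec x))) at 2.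
    e2. rewrite I_es, I2c_cl. apply CU2. apply rep2_wt.
  - intro x. destruct Heq as [_ [_ [_ H]]]. apply H.
Qed.
End Counit.

Section Calc.
Variable A : TwoCat.
Hypothesis HA : is_twocat A.

Lemma b_pd (x : cell A) : dom (tgt x) = dom (src x). Proof. symmetry; apply (tc_par_dom HA). Qed.
Lemma b_pc (x : cell A) : cod (tgt x) = cod (src x). Proof. symmetry; apply (tc_par_cod HA). Qed.
Lemma b_cil (f : hom A) X : dom f = X -> comp1 (id1 X) f = f.
Proof. intros <-. apply (tc_comp1_id_l HA). Qed.
Lemma b_cir (f : hom A) Y : cod f = Y -> comp1 f (id1 Y) = f.
Proof. intros <-. apply (tc_comp1_id_r HA). Qed.
Lemma b_ca (f g h : hom A) : cod f = dom g -> cod g = dom h ->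
  comp1 (comp1 f g) h = comp1 f (comp1 g h).
Proof. apply (tc_comp1_assoc HA). Qed.
Lemma v_idl (x : cell A) f : src x = f -> vcomp (id2 f) x = x.
Proof. intros <-. apply (tc_vcomp_id_l HA). Qed.
Lemma v_idr (x : cell A) g : tgt x = g -> vcomp x (id2 g) = x.
Proof. intros <-. apply (tc_vcomp_id_r HA). Qed.
Lemma h_idl (x : cell A) X : dom (src x) = X -> hcomp (id2 (id1 X)) x = x.
Proof. intros <-. apply (tc_hcomp_id_l HA). Qed.
Lemma h_idr (x : cell A) Y : cod (src x) = Y -> hcomp x (id2 (id1 Y)) = x.
Proof. intros <-. apply (tc_hcomp_id_r HA). Qed.
End Calc.

Ltac addpar HA := repeat match goal with x : cell _ |- _ =>
    lazymatch goal with _ : dom (tgt x) = dom (src x) |- _ => fail | _ =>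
      pose proof (b_pd HA x); pose proof (b_pc HA x) end end.

Ltac bsolve HA :=
  repeat first [
      rewrite (tc_id2_src HA) | rewrite (tc_id2_tgt HA)
    | rewrite (tc_id1_dom HA) | rewrite (tc_id1_cod HA)
    | rewrite (b_pd HA) | rewrite (b_pc HA)
    | rewrite (tc_vcomp_src HA) by bsolve HA | rewrite (tc_vcomp_tgt HA) by bsolve HA
    | rewrite (tc_hcomp_src HA) by bsolve HA | rewrite (tc_hcomp_tgt HA) by bsolve HA
    | rewrite (tc_comp1_dom HA) by bsolve HA | rewrite (tc_comp1_cod HA) by bsolve HA
    | rewrite (b_cil HA) by bsolve HA | rewrite (b_cir HA) by bsolve HA
    | rewrite (b_ca HA) by bsolve HA
    | match goal with H : src ?x = _ |- context [src ?x] => is_var x; rewrite H end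
    | match goal with H : tgt ?x = _ |- context [tgt ?x] => is_var x; rewrite H end
    | match goal with H : dom ?x = _ |- context [dom ?x] => is_var x; rewrite H end
    | match goal with H : cod ?x = _ |- context [cod ?x] => is_var x; rewrite H end ];
  first [reflexivity | congruence | (addpar HA; congruence)].

Section Calc2.
Variable A : TwoCat.
Hypothesis HA : is_twocat A.

Lemma wv_r (x y : cell A) (k : hom A) : tgt x = src y -> cod (src x) = dom k ->
  hcomp (vcomp x y) (id2 k) = vcomp (hcomp x (id2 k)) (hcomp y (id2 k)).
Proof. intros H1 H2.
  rewrite <- (tc_interchange HA) by bsolve HA.
  rewrite (v_idr HA) by bsolve HA. reflexivity. Qed.
Lemma wv_l (x y : cell A) (k : hom A) : tgt x = src y -> cod k = dom (src x) ->
  hcomp (id2 k) (vcomp x y) = vcomp (hcomp (id2 k) x) (hcomp (id2 k) y).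
Proof. intros H1 H2.
  rewrite <- (tc_interchange HA) by bsolve HA.
  rewrite (v_idr HA) by bsolve HA. reflexivity. Qed.
Lemma nat_l (x y : cell A) : cod (src x) = dom (src y) ->
  hcomp x y = vcomp (hcomp x (id2 (src y))) (hcomp (id2 (tgt x)) y).
Proof. intro H.
  rewrite <- (tc_interchange HA) by bsolve HA.
  rewrite (v_idr HA) by bsolve HA. rewrite (v_idl HA) by bsolve HA. reflexivity. Qed.
Lemma nat_r (x y : cell A) : cod (src x) = dom (src y) ->
  hcomp x y = vcomp (hcomp (id2 (src x)) y) (hcomp x (id2 (tgt y))).
Proof. intro H.
  rewrite <- (tc_interchange HA) by bsolve HA.
  rewrite (v_idr HA) by bsolve HA. rewrite (v_idl HA) by bsolve HA. reflexivity. Qed.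
Lemma wa_r (x : cell A) (g h : hom A) : cod (src x) = dom g -> cod g = dom h ->
  hcomp (hcomp x (id2 g)) (id2 h) = hcomp x (id2 (comp1 g h)).
Proof. intros H1 H2. rewrite (tc_hcomp_assoc HA) by bsolve HA.
  rewrite (tc_hcomp_id2 HA) by bsolve HA. reflexivity. Qed.
Lemma wa_l (x : cell A) (f g : hom A) : cod f = dom g -> cod g = dom (src x) ->
  hcomp (id2 f) (hcomp (id2 g) x) = hcomp (id2 (comp1 f g)) x.
Proof. intros H1 H2. rewrite <- (tc_hcomp_assoc HA) by bsolve HA.
  rewrite (tc_hcomp_id2 HA) by bsolve HA. reflexivity. Qed.
End Calc2.

Section Core.
Variable A : TwoCat.
Hypothesis HA : is_twocat A.

Lemma retr (α r τ0 τ0i : cell A) (f f' h : hom A) (X Y : ob A) :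
  src α = f -> tgt α = f' -> dom f = X -> cod f = Y -> dom f' = X -> cod f' = Y ->
  dom h = Y -> cod h = X ->
  src r = comp1 f' h -> tgt r = comp1 f h ->
  vcomp (hcomp α (id2 h)) r = id2 (comp1 f h) ->
  src τ0 = comp1 h f -> tgt τ0 = id1 Y -> src τ0i = id1 Y -> tgt τ0i = comp1 h f ->
  vcomp τ0i τ0 = id2 (id1 Y) ->
  exists ρ, src ρ = f' /\ tgt ρ = f /\ vcomp α ρ = id2 f.
Proof.
  intros Ha1 Ha2 Hf1 Hf2 Hf1' Hf2' Hh1 Hh2 Hr1 Hr2 Hr Ht1 Ht2 Hti1 Hti2 Hti.
  exists (vcomp (vcomp (hcomp (id2 f') τ0i) (hcomp r (id2 f))) (hcomp (id2 f) τ0)).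
  split; [bsolve HA|split; [bsolve HA|]].
  assert (K1 : vcomp α (hcomp (id2 f') τ0i) = vcomp (hcomp (id2 f) τ0i) (hcomp α (id2 (comp1 h f)))).
  { transitivity (hcomp α τ0i).
    - rewrite (nat_l HA (x:=α) (y:=τ0i)) by bsolve HA. rewrite Hti1, Ha2.
      rewrite (h_idr HA) by bsolve HA. reflexivity.
    - rewrite (nat_r HA (x:=α) (y:=τ0i)) by bsolve HA. rewrite Hti2, Ha1. reflexivity. }
  rewrite <- !(tc_vcomp_assoc HA) by bsolve HA.
  rewrite K1.
  rewrite <- (wa_r HA (x:=α) (g:=h) (h:=f)) by bsolve HA.
  rewrite (tc_vcomp_assoc HA (x:=hcomp (id2 f) τ0i)) by bsolve HA.
  rewrite <- (wv_r HA) by bsolve HA.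
  rewrite Hr. rewrite (tc_hcomp_id2 HA) by bsolve HA.
  rewrite (v_idr HA) by bsolve HA.
  rewrite <- (wv_l HA) by bsolve HA.
  rewrite Hti. rewrite (tc_hcomp_id2 HA) by bsolve HA.
  rewrite (b_cir HA) by bsolve HA. reflexivity.
Qed.

Lemma sect (α s s1 s1i : cell A) (f f' h' : hom A) (X Y : ob A) :
  src α = f -> tgt α = f' -> dom f = X -> cod f = Y -> dom f' = X -> cod f' = Y ->
  dom h' = Y -> cod h' = X ->
  src s = comp1 h' f' -> tgt s = comp1 h' f ->
  vcomp s (hcomp (id2 h') α) = id2 (comp1 h' f') ->
  src s1 = comp1 f' h' -> tgt s1 = id1 X -> src s1i = id1 X -> tgt s1i = comp1 f' h' ->
  vcomp s1i s1 = id2 (id1 X) ->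
  exists σ, src σ = f' /\ tgt σ = f /\ vcomp σ α = id2 f'.
Proof.
  intros Ha1 Ha2 Hf1 Hf2 Hf1' Hf2' Hh1 Hh2 Hs1 Hs2 Hs Ht1 Ht2 Hti1 Hti2 Hti.
  exists (vcomp (vcomp (hcomp s1i (id2 f')) (hcomp (id2 f') s)) (hcomp s1 (id2 f))).
  split; [bsolve HA|split; [bsolve HA|]].
  assert (K1 : vcomp (hcomp s1 (id2 f)) α = vcomp (hcomp (id2 (comp1 f' h')) α) (hcomp s1 (id2 f'))).
  { transitivity (hcomp s1 α).
    - rewrite (nat_l HA (x:=s1) (y:=α)) by bsolve HA. rewrite Ht2, Ha1.
      rewrite (h_idl HA) by bsolve HA. reflexivity.
    - rewrite (nat_r HA (x:=s1) (y:=α)) by bsolve HA. rewrite Ht1, Ha2. reflexivity. }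
  rewrite !(tc_vcomp_assoc HA) by bsolve HA.
  rewrite K1.
  rewrite <- (wa_l HA (x:=α) (f:=f') (g:=h')) by bsolve HA.
  rewrite <- (tc_vcomp_assoc HA (x:=hcomp (id2 f') s)) by bsolve HA.
  rewrite <- (wv_l HA) by bsolve HA.
  rewrite Hs. rewrite (tc_hcomp_id2 HA) by bsolve HA.
  rewrite (v_idl HA) by bsolve HA.
  rewrite <- (wv_r HA) by bsolve HA.
  rewrite Hti. rewrite (tc_hcomp_id2 HA) by bsolve HA.
  rewrite (b_cil HA) by bsolve HA. reflexivity.
Qed.

Lemma whisk_iso (α γ Pi Qi τ0 τ0i s1 s1i : cell A) (f f' h h' : hom A) (X Y : ob A) :
  src α = f -> tgt α = f' -> dom f = X -> cod f = Y -> dom f' = X -> cod f' = Y ->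
  src γ = h -> tgt γ = h' -> dom h = Y -> cod h = X -> dom h' = Y -> cod h' = X ->
  src Pi = comp1 f' h' -> tgt Pi = comp1 f h -> vcomp (hcomp α γ) Pi = id2 (comp1 f h) ->
  src Qi = comp1 h' f' -> tgt Qi = comp1 h f -> vcomp Qi (hcomp γ α) = id2 (comp1 h' f') ->
  src τ0 = comp1 h f -> tgt τ0 = id1 Y -> src τ0i = id1 Y -> tgt τ0i = comp1 h f ->
  vcomp τ0i τ0 = id2 (id1 Y) ->
  src s1 = comp1 f' h' -> tgt s1 = id1 X -> src s1i = id1 X -> tgt s1i = comp1 f' h' ->
  vcomp s1i s1 = id2 (id1 X) ->
  iso2 α.
Proof.
  intros Ha1 Ha2 Hf1 Hf2 Hf1' Hf2' Hg1 Hg2 Hh1 Hh2 Hh1' Hh2' HP1 HP2 HP HQ1 HQ2 HQ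
    Ht1 Ht2 Hti1 Hti2 Hti Hs1 Hs2 Hsi1 Hsi2 Hsi.
  destruct (@retr α (vcomp (hcomp (id2 f') γ) Pi) τ0 τ0i f f' h X Y) as [ρ [Hr1 [Hr2 Hr]]];
    try assumption; try (bsolve HA).
  { rewrite <- (tc_vcomp_assoc HA) by bsolve HA.
    rewrite <- Ha2, <- Hg1. rewrite <- (nat_l HA) by bsolve HA. rewrite ?Ha1, ?Ha2, ?Hg1, ?Hg2. exact HP. }
  destruct (@sect α (vcomp Qi (hcomp γ (id2 f))) s1 s1i f f' h' X Y) as [σ [Hs1' [Hs2' Hs]]];
    try assumption; try (bsolve HA).
  { rewrite (tc_vcomp_assoc HA) by bsolve HA.
    rewrite <- Ha1, <- Hg2. rewrite <- (nat_l HA) by bsolve HA. rewrite ?Ha1, ?Ha2, ?Hg1, ?Hg2. exact HQ. }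
  assert (E : σ = ρ).
  { transitivity (vcomp σ (vcomp α ρ)).
    - rewrite Hr. rewrite (v_idr HA) by bsolve HA. reflexivity.
    - rewrite <- (tc_vcomp_assoc HA) by bsolve HA. rewrite Hs.
      rewrite (v_idl HA) by bsolve HA. reflexivity. }
  subst σ. exists ρ. rewrite Ha1, Ha2. repeat split; assumption.
Qed.
End Core.

Lemma sig_ext (X : Type) (P : X -> Prop) (a b : {x | P x}) : proj1_sig a = proj1_sig b -> a = b.
Proof. destruct a, b; simpl; intros ->. f_equal. apply proof_irrelevance. Qed.
Lemma restrict_val (X : Type) (P : X -> Prop) x d : P x -> proj1_sig (@restrict X P x d) = x.
Proof. intro H. unfold restrict. destruct (excluded_middle_informative (P x)); [reflexivity|contradiction]. Qed.

Section Iso.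
Variable A : TwoCat.
Hypothesis HA : is_twocat A.

Lemma iso_id (f : hom A) : iso2 (id2 f).
Proof. exists (id2 f). rewrite (tc_id2_src HA), (tc_id2_tgt HA).
  repeat split; apply (v_idl HA); apply (tc_id2_src HA). Qed.

Lemma iso_vcomp (x y : cell A) : iso2 x -> iso2 y -> tgt x = src y -> iso2 (vcomp x y).
Proof.
  intros [x' [X1 [X2 [X3 X4]]]] [y' [Y1 [Y2 [Y3 Y4]]]] E.
  exists (vcomp y' x'). split; [bsolve HA|split; [bsolve HA|split]].
  - rewrite (tc_vcomp_src HA E).
    rewrite (tc_vcomp_assoc HA) by bsolve HA.
    rewrite <- (tc_vcomp_assoc HA (x:=y)) by bsolve HA. rewrite Y3.
    rewrite (v_idl HA) by bsolve HA. exact X3.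
  - rewrite (tc_vcomp_tgt HA E).
    rewrite (tc_vcomp_assoc HA) by bsolve HA.
    rewrite <- (tc_vcomp_assoc HA (x:=x')) by bsolve HA. rewrite X4, E.
    rewrite (v_idl HA) by bsolve HA. exact Y4.
Qed.

Lemma iso_whr (x : cell A) (k : hom A) : iso2 x -> cod (src x) = dom k -> iso2 (hcomp x (id2 k)).
Proof.
  intros [x' [X1 [X2 [X3 X4]]]] E.
  exists (hcomp x' (id2 k)). split; [bsolve HA|split; [bsolve HA|split]].
  - rewrite <- (wv_r HA) by bsolve HA. rewrite X3, (tc_hcomp_src HA) by bsolve HA.
    rewrite (tc_hcomp_id2 HA) by bsolve HA. rewrite (tc_id2_src HA). reflexivity.
  - rewrite <- (wv_r HA) by bsolve HA. rewrite X4, (tc_hcomp_tgt HA) by bsolve HA.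
    rewrite (tc_hcomp_id2 HA) by bsolve HA. rewrite (tc_id2_tgt HA). reflexivity.
Qed.

Lemma iso_whl (x : cell A) (k : hom A) : iso2 x -> cod k = dom (src x) -> iso2 (hcomp (id2 k) x).
Proof.
  intros [x' [X1 [X2 [X3 X4]]]] E.
  exists (hcomp (id2 k) x'). split; [bsolve HA|split; [bsolve HA|split]].
  - rewrite <- (wv_l HA) by bsolve HA. rewrite X3, (tc_hcomp_src HA) by bsolve HA.
    rewrite (tc_hcomp_id2 HA) by bsolve HA. rewrite (tc_id2_src HA). reflexivity.
  - rewrite <- (wv_l HA) by bsolve HA. rewrite X4, (tc_hcomp_tgt HA) by bsolve HA.
    rewrite (tc_hcomp_id2 HA) by bsolve HA. rewrite (tc_id2_tgt HA). reflexivity.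
Qed.

Lemma iso_sym (x y : cell A) : src y = tgt x -> tgt y = src x -> vcomp x y = id2 (src x) ->
  vcomp y x = id2 (tgt x) -> iso2 y.
Proof. intros H1 H2 H3 H4. exists x. rewrite H1, H2. auto. Qed.
End Iso.

Section FunIso.
Variables A C : TwoCat.
Hypothesis HA : is_twocat A.
Hypothesis HC : is_twocat C.
Variable F : TwoFun A C.
Hypothesis HF : is_twofun F.

Lemma F_iso (x : cell A) : iso2 x -> iso2 (F_cell F x).
Proof.
  intros [y [Y1 [Y2 [Y3 Y4]]]]. exists (F_cell F y).
  rewrite !(tf_src HF), !(tf_tgt HF), Y1, Y2.
  split; [reflexivity|split; [reflexivity|split]].
  - rewrite <- (tf_vcomp HF) by congruence. rewrite Y3. apply (tf_id2 HF).
  - rewrite <- (tf_vcomp HF) by congruence. rewrite Y4. apply (tf_id2 HF).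
Qed.

Lemma F_equiv (f : hom A) : is_equiv f -> is_equiv (F_hom F f).
Proof.
  intros [g [G1 [G2 [[x [X1 [X2 X3]]] [y [Y1 [Y2 Y3]]]]]]].
  exists (F_hom F g). split; [rewrite (tf_dom HF), (tf_cod HF), G1; reflexivity|split; [rewrite (tf_dom HF), (tf_cod HF), G2; reflexivity|split]].
  - exists (F_cell F x). split; [|split].
    + rewrite (tf_src HF), X1. apply (tf_comp1 HF). congruence.
    + rewrite (tf_tgt HF), X2, (tf_id1 HF), (tf_dom HF). reflexivity.
    + apply F_iso; auto.
  - exists (F_cell F y). split; [|split].
    + rewrite (tf_src HF), Y1. apply (tf_comp1 HF). congruence.
    + rewrite (tf_tgt HF), Y2, (tf_id1 HF), (tf_cod HF). reflexivity.
    + apply F_iso; auto.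
Qed.
End FunIso.

Section VerHH.
Variable A : TwoCat.
Hypothesis HA : is_twocat A.
Variable HD : is_dblcat (HH A).

Lemma V2_iff (s0 s1 a b : cell A) : V2 (D:=HH A) (@mkVQ (HH A) s0 s1 a b) <->
  (dom (src a) = dom (src b) /\ cod (src a) = cod (src b) /\ src s0 = src a /\ tgt s0 = src b /\
   src s1 = tgt a /\ tgt s1 = tgt b /\ vcomp s0 b = vcomp a s1).
Proof.
  unfold V2, globular; simpl. split.
  - intros [H1 [H2 [_ [_ [H3 [H4 [H5 [H6 H7]]]]]]]]. repeat split; assumption.
  - intros [H1 [H2 [H3 [H4 [H5 [H6 H7]]]]]]. repeat split; assumption.
Qed.

Lemma V2_vcomp (s0 s1 a b t0 t1 c d : cell A) :
  V2 (D:=HH A) (@mkVQ (HH A) s0 s1 a b) -> V2 (D:=HH A) (@mkVQ (HH A) t0 t1 c d) -> b = c ->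
  V2 (D:=HH A) (@mkVQ (HH A) (vcomp s0 t0) (vcomp s1 t1) a d).
Proof.
  rewrite !V2_iff. intros [H1 [H2 [H3 [H4 [H5 [H6 H7]]]]]] [K1 [K2 [K3 [K4 [K5 [K6 K7]]]]]] E. subst c.
  split; [congruence|split; [congruence|split; [bsolve HA|split; [bsolve HA|split; [bsolve HA|split; [bsolve HA|]]]]]].
  rewrite (tc_vcomp_assoc HA) by bsolve HA. rewrite K7.
  rewrite <- (tc_vcomp_assoc HA) by bsolve HA. rewrite H7.
  rewrite (tc_vcomp_assoc HA) by bsolve HA. reflexivity.
Qed.

Lemma VA_vcomp (x y : cell (Ver HD)) : tgt x = src y ->
  proj1_sig (vcomp (t:=Ver HD) x y) =
  @mkVQ (HH A) (vcomp (vs0 (proj1_sig x)) (vs0 (proj1_sig y))) (vcomp (vs1 (proj1_sig x)) (vs1 (proj1_sig y)))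
       (va (proj1_sig x)) (vb (proj1_sig y)).
Proof.
  destruct x as [[s0 s1 a b] Hx], y as [[t0 t1 c d] Hy]. simpl. intro E.
  apply restrict_val. exact (V2_vcomp Hx Hy E).
Qed.

Lemma VA_iso_fwd (x : cell (Ver HD)) : iso2 x -> iso2 (vs0 (proj1_sig x)) /\ iso2 (vs1 (proj1_sig x)).
Proof.
  intros [y [Y1 [Y2 [Y3 Y4]]]].
  pose proof (f_equal (@proj1_sig _ _) Y3) as Z3. pose proof (f_equal (@proj1_sig _ _) Y4) as Z4.
  rewrite VA_vcomp in Z3 by congruence. rewrite VA_vcomp in Z4 by congruence.
  clear Y3 Y4. destruct x as [[s0 s1 a b] Hx], y as [[t0 t1 c d] Hy]. simpl in *. subst c d.
  apply (proj1 (V2_iff s0 s1 a b)) in Hx. apply (proj1 (V2_iff t0 t1 b a)) in Hy.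
  destruct Hx as [H1 [H2 [H3 [H4 [H5 [H6 H7]]]]]]. destruct Hy as [K1 [K2 [K3 [K4 [K5 [K6 K7]]]]]].
  injection Z3 as E1 E2. injection Z4 as F1 F2.
  split.
  - exists t0. split; [congruence|split; [congruence|split; congruence]].
  - exists t1. split; [congruence|split; [congruence|split; congruence]].
Qed.

Lemma VA_iso_bwd (x : cell (Ver HD)) : iso2 (vs0 (proj1_sig x)) -> iso2 (vs1 (proj1_sig x)) -> iso2 x.
Proof.
  destruct x as [[s0 s1 a b] Hx]. simpl.
  intros [t0 [T1 [T2 [T3 T4]]]] [t1 [U1 [U2 [U3 U4]]]].
  pose proof Hx as Hx'. apply V2_iff in Hx'. destruct Hx' as [H1 [H2 [H3 [H4 [H5 [H6 H7]]]]]].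
  assert (Hy : V2 (D:=HH A) (@mkVQ (HH A) t0 t1 b a)).
  { apply V2_iff. split; [congruence|split; [congruence|split; [congruence|split; [congruence|split; [congruence|split; [congruence|]]]]]].
    transitivity (vcomp t0 (vcomp a (vcomp s1 t1))).
    { rewrite U3. rewrite (v_idr HA) by bsolve HA. reflexivity. }
    rewrite <- (tc_vcomp_assoc HA (x:=a)) by bsolve HA. rewrite <- H7.
    rewrite (tc_vcomp_assoc HA (x:=s0)) by bsolve HA.
    rewrite <- (tc_vcomp_assoc HA (x:=t0)) by bsolve HA. rewrite T4.
    rewrite (v_idl HA) by bsolve HA. reflexivity. }
  exists (exist _ _ Hy).
  split; [reflexivity|split; [reflexivity|split]].
  - apply sig_ext. rewrite VA_vcomp by reflexivity. simpl. rewrite T3, U3, H3, H5. reflexivity.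
  - apply sig_ext. rewrite VA_vcomp by reflexivity. simpl. rewrite T4, U4, H4, H6. reflexivity.
Qed.

Lemma VE2 (α : cell A) : iso2 α -> is_equiv (tgt α) -> is_equiv (C:=Ver HD) α.
Proof.
  intros Hi [g [G1 [G2 [[u [U1 [U2 U3]]] [v [V1 [V2' V3]]]]]]].
  exists (id2 g). split; [simpl; bsolve HA|split; [simpl; bsolve HA|split]].
  - assert (Hq : V2 (@mkVQ (HH A) (vcomp (hcomp α (id2 g)) u) u (hcomp α (id2 g)) (id2 (id1 (dom (src α)))))).
    { apply V2_iff. split; [bsolve HA|split; [bsolve HA|split; [bsolve HA|split; [bsolve HA|split; [bsolve HA|split; [bsolve HA|]]]]]].
      rewrite (v_idr HA) by bsolve HA. reflexivity. }
    exists (exist _ _ Hq). split; [reflexivity|split; [reflexivity|]].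
    apply VA_iso_bwd; simpl.
    + apply (iso_vcomp HA); [apply (iso_whr HA); [exact Hi|bsolve HA]|exact U3|bsolve HA].
    + exact U3.
  - assert (Hq : V2 (@mkVQ (HH A) (vcomp (hcomp (id2 g) α) v) v (hcomp (id2 g) α) (id2 (id1 (cod (src α)))))).
    { apply V2_iff. split; [bsolve HA|split; [bsolve HA|split; [bsolve HA|split; [bsolve HA|split; [bsolve HA|split; [bsolve HA|]]]]]].
      rewrite (v_idr HA) by bsolve HA. reflexivity. }
    exists (exist _ _ Hq). split; [reflexivity|split; [reflexivity|]].
    apply VA_iso_bwd; simpl.
    + apply (iso_vcomp HA); [apply (iso_whl HA); [exact Hi|bsolve HA]|exact V3|bsolve HA].
    + exact V3.
Qed.

Lemma VE1 (β : cell A) : is_equiv (C:=Ver HD) β -> is_equiv (tgt β) /\ iso2 β.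
Proof.
  intros [g [G1 [G2 [[x [X1 [X2 X3]]] [y [Y1 [Y2 Y3]]]]]]].
  simpl in G1, G2.
  destruct (VA_iso_fwd X3) as [[s0i [S1 [S2 [S3 S4]]]] Is1].
  destruct (VA_iso_fwd Y3) as [[t0i [T1 [T2 [T3 T4]]]] It1].
  clear X3 Y3. destruct x as [[s0 s1 a b] Hx]. destruct y as [[t0 t1 c d] Hy]. simpl in *. subst a b c d.
  apply (proj1 (V2_iff _ _ _ _)) in Hx. apply (proj1 (V2_iff _ _ _ _)) in Hy.
  destruct Hx as [H1 [H2 [H3 [H4 [H5 [H6 H7]]]]]]. destruct Hy as [K1 [K2 [K3 [K4 [K5 [K6 K7]]]]]].
  rewrite (v_idr HA) in H7 by bsolve HA. rewrite (v_idr HA) in K7 by bsolve HA.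
  destruct Is1 as [s1i [R1 [R2 [R3 R4]]]]. destruct It1 as [t1i [Q1 [Q2 [Q3 Q4]]]].
  split.
  - exists (tgt g). split; [bsolve HA|split; [bsolve HA|split]].
    + exists s1. split; [bsolve HA|split; [bsolve HA|]]. exists s1i. auto.
    + exists t1. split; [bsolve HA|split; [bsolve HA|]]. exists t1i. auto.
  - apply (@whisk_iso A HA β g (vcomp s1 s0i) (vcomp t1 t0i) t0 t0i s1 s1i
       (src β) (tgt β) (src g) (tgt g) (dom (src β)) (cod (src β)));
      try reflexivity; try (bsolve HA).
    + rewrite <- (tc_vcomp_assoc HA) by bsolve HA. rewrite <- H7. rewrite S3. rewrite H3. f_equal. bsolve HA.
    + assert (EQ : hcomp g β = vcomp t0 t1i).
      { rewrite K7. rewrite (tc_vcomp_assoc HA) by bsolve HA. rewrite Q3.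
        rewrite (v_idr HA) by bsolve HA. reflexivity. }
      rewrite EQ. rewrite (tc_vcomp_assoc HA) by bsolve HA.
      rewrite <- (tc_vcomp_assoc HA (x:=t0i)) by bsolve HA. rewrite T4.
      rewrite (v_idl HA) by bsolve HA. rewrite Q3. f_equal. bsolve HA.
    + rewrite T4. bsolve HA.
    + rewrite R4. bsolve HA.
Qed.
End VerHH.

Section VerF.
Variables A C : TwoCat.
Hypothesis HA : is_twocat A.
Hypothesis HC : is_twocat C.
Variable F : TwoFun A C.
Hypothesis HF : is_twofun F.
Variable HD : is_dblcat (HH A).
Variable HE : is_dblcat (HH C).

Lemma V2_F (s0 s1 a b : cell A) : V2 (D:=HH A) (@mkVQ (HH A) s0 s1 a b) ->
  V2 (D:=HH C) (@mkVQ (HH C) (F_cell F s0) (F_cell F s1) (F_cell F a) (F_cell F b)).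
Proof.
  intro H. apply (proj1 (V2_iff (A:=A) s0 s1 a b)) in H. apply (proj2 (V2_iff (A:=C) _ _ _ _)).
  destruct H as [H1 [H2 [H3 [H4 [H5 [H6 H7]]]]]].
  rewrite !(tf_src HF), !(tf_tgt HF), !(tf_dom HF), !(tf_cod HF).
  split; [congruence|split; [congruence|split; [congruence|split; [congruence|split; [congruence|split; [congruence|]]]]]].
  rewrite <- !(tf_vcomp HF) by congruence. rewrite H7. reflexivity.
Qed.

Lemma VF_cell (x : cell (Ver HD)) : proj1_sig (F_cell (Verf HD HE (HHf F)) x) =
  @mkVQ (HH C) (F_cell F (vs0 (proj1_sig x))) (F_cell F (vs1 (proj1_sig x)))
        (F_cell F (va (proj1_sig x))) (F_cell F (vb (proj1_sig x))).
Proof. destruct x as [[s0 s1 a b] Hx]. simpl. apply restrict_val. apply V2_F. exact Hx. Qed.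

Lemma Verf_fib : lack_fib F -> lack_fib (Verf HD HE (HHf F)).
Proof.
  intros [LF1 LF2]. split.
  - simpl. intros c b Hcb Heq.
    destruct (VE1 HC Heq) as [Eq Ib].
    destruct (LF1 c (tgt b)) as [f' [Hf1 [Hf2 Hf3]]]; [rewrite (b_pc HC); exact Hcb|exact Eq|].
    destruct (LF2 f' b) as [α [Ha1 [Ha2 Ha3]]]; [congruence|exact Ib|].
    exists α. split; [|split].
    + rewrite <- (b_pc HA), Ha1. exact Hf1.
    + apply (VE2 HA HD Ha2). rewrite Ha1. exact Hf2.
    + exact Ha3.
  - intros γ beta Hb Ib.
    destruct (VA_iso_fwd HC Ib) as [I0 I1].
    destruct beta as [[s0 s1 b b'] Hbeta]. simpl in Hb, I0, I1. subst b'.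
    pose proof Hbeta as Hb'. apply (proj1 (V2_iff (A:=C) _ _ _ _)) in Hb'.
    destruct Hb' as [H1 [H2 [H3 [H4 [H5 [H6 H7]]]]]].
    destruct (LF2 (src γ) s0) as [x0 [X1 [X2 X3]]]; [rewrite H4; apply (tf_src HF)|exact I0|].
    destruct (LF2 (tgt γ) s1) as [x1 [Y1 [Y2 Y3]]]; [rewrite H6; apply (tf_tgt HF)|exact I1|].
    pose proof Y2 as [x1i [Z1 [Z2 [Z3 Z4]]]].
    assert (Hq : V2 (D:=HH A) (@mkVQ (HH A) x0 x1 (vcomp (vcomp x0 γ) x1i) γ)).
    { apply (proj2 (V2_iff (A:=A) _ _ _ _)).
      split; [bsolve HA|split; [bsolve HA|split; [bsolve HA|split; [bsolve HA|split; [bsolve HA|split; [bsolve HA|]]]]]].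
      rewrite (tc_vcomp_assoc HA) by bsolve HA. rewrite Z4. rewrite (v_idr HA) by bsolve HA. reflexivity. }
    exists (exist _ _ Hq). split; [reflexivity|split].
    + apply (VA_iso_bwd HA (HD:=HD)); simpl; assumption.
    + apply sig_ext. rewrite VF_cell. simpl. rewrite X3, Y3. f_equal.
      rewrite !(tf_vcomp HF) by bsolve HA. rewrite X3.
      rewrite H7, <- Y3.
      assert (E1 : tgt b = src (F_cell F x1)) by (rewrite Y3; symmetry; exact H5).
      assert (E2 : tgt (F_cell F x1) = src (F_cell F x1i)) by (rewrite (tf_src HF), (tf_tgt HF); congruence).
      rewrite (tc_vcomp_assoc HC E1 E2). rewrite <- (tf_vcomp HF) by congruence.
      rewrite Z3, (tf_id2 HF). apply (v_idr HC). rewrite E1. apply (tf_src HF).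
Qed.

Lemma Verf_we : biequiv F -> biequiv (Verf HD HE (HHf F)).
Proof.
  intros [B1 [B2 B3]]. split; [|split].
  - intro b. destruct (B1 b) as [a [e [E1 [E2 E3]]]].
    exists a, (id2 e). simpl. split; [rewrite (tc_id2_src HC); exact E1|split; [rewrite (tc_id2_src HC); exact E2|]].
    apply (VE2 HC HE). apply (iso_id HC). rewrite (tc_id2_tgt HC). exact E3.
  - simpl. intros a a' γ Hg1 Hg2.
    destruct (B2 a a' (src γ) Hg1 Hg2) as [f [s0 [F1 [F2 [S1 [S2 I0]]]]]].
    destruct (B2 a a' (tgt γ)) as [f' [s1 [F1' [F2' [T1 [T2 I1]]]]]];
      [rewrite (b_pd HC); exact Hg1|rewrite (b_pc HC); exact Hg2|].
    pose proof I1 as [s1i [Z1 [Z2 [Z3 Z4]]]].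
    assert (Hd : dom f = dom f') by congruence. assert (Hc : cod f = cod f') by congruence.
    destruct (B3 f f' (vcomp (vcomp s0 γ) s1i) Hd Hc) as [α [[A1 [A2 A3]] _]];
      [bsolve HC|bsolve HC|].
    assert (Hq : V2 (D:=HH C) (@mkVQ (HH C) s0 s1 (F_cell F α) γ)).
    { apply (proj2 (V2_iff (A:=C) _ _ _ _)). rewrite A3.
      split; [bsolve HC|split; [bsolve HC|split; [bsolve HC|split; [bsolve HC|split; [bsolve HC|split; [bsolve HC|]]]]]].
      rewrite (tc_vcomp_assoc HC) by bsolve HC. rewrite Z4. rewrite (v_idr HC) by bsolve HC. reflexivity. }
    exists α, (exist _ _ Hq). simpl.
    split; [congruence|split; [congruence|split; [reflexivity|split; [reflexivity|]]]].
    apply (VA_iso_bwd HC (HD:=HE)); simpl; assumption.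
  - intros α α' y Hd Hc Hy1 Hy2. change (dom (src α) = dom (src α')) in Hd. change (cod (src α) = cod (src α')) in Hc.
    destruct y as [[t0 t1 c d] Hy]. simpl in Hy1, Hy2. subst c d.
    pose proof Hy as Hy'. apply (proj1 (V2_iff (A:=C) _ _ _ _)) in Hy'.
    destruct Hy' as [H1 [H2 [H3 [H4 [H5 [H6 H7]]]]]].
    rewrite (tf_src HF) in H3, H4. rewrite (tf_tgt HF) in H5, H6.
    destruct (B3 (src α) (src α') t0 Hd Hc H3 H4) as [x0 [[X1 [X2 X3]] XU]].
    assert (Hd' : dom (tgt α) = dom (tgt α')) by (rewrite !(b_pd HA); exact Hd).
    assert (Hc' : cod (tgt α) = cod (tgt α')) by (rewrite !(b_pc HA); exact Hc).
    destruct (B3 (tgt α) (tgt α') t1 Hd' Hc' H5 H6) as [x1 [[Y1 [Y2 Y3]] YU]].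
    assert (Hcomp : vcomp x0 α' = vcomp α x1).
    { assert (Hd2 : dom (src α) = dom (tgt α')) by (rewrite (b_pd HA); exact Hd).
      assert (Hc2 : cod (src α) = cod (tgt α')) by (rewrite (b_pc HA); exact Hc).
      assert (Ks : src (vcomp t0 (F_cell F α')) = F_hom F (src α)).
      { rewrite (tc_vcomp_src HC); [exact H3|rewrite H4, (tf_src HF); reflexivity]. }
      assert (Kt : tgt (vcomp t0 (F_cell F α')) = F_hom F (tgt α')).
      { rewrite (tc_vcomp_tgt HC); [apply (tf_tgt HF)|rewrite H4, (tf_src HF); reflexivity]. }
      destruct (B3 (src α) (tgt α') (vcomp t0 (F_cell F α')) Hd2 Hc2 Ks Kt) as [z [_ ZU]].
      rewrite (ZU (vcomp x0 α')), (ZU (vcomp α x1)); try reflexivity.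
      - bsolve HA. - bsolve HA.
      - rewrite (tf_vcomp HF) by congruence. rewrite Y3, H7. reflexivity.
      - bsolve HA. - bsolve HA.
      - rewrite (tf_vcomp HF) by congruence. rewrite X3. reflexivity. }
    assert (Hq : V2 (D:=HH A) (@mkVQ (HH A) x0 x1 α α')).
    { apply (proj2 (V2_iff (A:=A) _ _ _ _)). repeat split; assumption. }
    exists (exist _ _ Hq). split; [split; [reflexivity|split; [reflexivity|]]|].
    + apply sig_ext. rewrite VF_cell. simpl. rewrite X3, Y3. reflexivity.
    + intros x' E1 E2 E3.
      pose proof (f_equal (@proj1_sig _ _) E3) as E4. rewrite VF_cell in E4. clear E3.
      destruct x' as [[u0 u1 c d] Hx']. simpl in E1, E2, E4. subst c d.
      injection E4 as U0 U1.
      pose proof Hx' as Hx''. apply (proj1 (V2_iff (A:=A) _ _ _ _)) in Hx''.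
      destruct Hx'' as [_ [_ [G3 [G4 [G5 [G6 _]]]]]].
      apply sig_ext. simpl. f_equal.
      * apply XU; assumption.
      * apply YU; assumption.
Qed.
End VerF.

Lemma glob_true (A : TwoCat) (x : cell A) : globular (D:=HH A) x.
Proof. unfold globular; simpl; split; reflexivity. Qed.

Section HorA.
Variable A : TwoCat.
Variable HD : is_dblcat (HH A).
Lemma Hor_vc (x y : cell (Hor HD)) :
  proj1_sig (vcomp (t:=Hor HD) x y) = vcomp (proj1_sig x) (proj1_sig y).
Proof. apply restrict_val. apply glob_true. Qed.

Lemma Hor_iso (x : cell (Hor HD)) : iso2 x <-> iso2 (proj1_sig x).
Proof.
  split.
  - intros [y [Y1 [Y2 [Y3 Y4]]]]. exists (proj1_sig y).
    apply (f_equal (@proj1_sig _ _)) in Y3. apply (f_equal (@proj1_sig _ _)) in Y4.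
    rewrite Hor_vc in Y3, Y4. split; [exact Y1|split; [exact Y2|split; [exact Y3|exact Y4]]].
  - intros [y [Y1 [Y2 [Y3 Y4]]]]. exists (exist _ y (glob_true y)).
    split; [exact Y1|split; [exact Y2|split]]; apply sig_ext; rewrite Hor_vc; assumption.
Qed.

Lemma Hor_eqv (f : hom A) : is_equiv (C:=Hor HD) f <-> is_equiv f.
Proof.
  split.
  - intros [g [G1 [G2 [[x [X1 [X2 X3]]] [y [Y1 [Y2 Y3]]]]]]].
    exists g. split; [exact G1|split; [exact G2|split]].
    + exists (proj1_sig x). split; [exact X1|split; [exact X2|apply Hor_iso; exact X3]].
    + exists (proj1_sig y). split; [exact Y1|split; [exact Y2|apply Hor_iso; exact Y3]].
  - intros [g [G1 [G2 [[x [X1 [X2 X3]]] [y [Y1 [Y2 Y3]]]]]]].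
    exists g. split; [exact G1|split; [exact G2|split]].
    + exists (exist _ x (glob_true x)). split; [exact X1|split; [exact X2|apply Hor_iso; exact X3]].
    + exists (exist _ y (glob_true y)). split; [exact Y1|split; [exact Y2|apply Hor_iso; exact Y3]].
Qed.
End HorA.

Section HorF.
Variables A C : TwoCat.
Variable F : TwoFun A C.
Variable HD : is_dblcat (HH A).
Variable HE : is_dblcat (HH C).

Lemma HorF_cell (x : cell (Hor HD)) :
  proj1_sig (F_cell (Horf HD HE (HHf F)) x) = F_cell F (proj1_sig x).
Proof. apply restrict_val. apply glob_true. Qed.

Lemma Horf_fib : lack_fib F -> lack_fib (Horf HD HE (HHf F)).
Proof.
  intros [LF1 LF2]. split.
  - intros c b Hcb Heq. apply Hor_eqv in Heq.
    destruct (LF1 c b Hcb Heq) as [a [A1 [A2 A3]]].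
    exists a. split; [exact A1|split; [apply Hor_eqv; exact A2|exact A3]].
  - intros c beta Hb Ib. apply Hor_iso in Ib.
    destruct (LF2 c (proj1_sig beta) Hb Ib) as [α [A1 [A2 A3]]].
    exists (exist _ α (glob_true α)). split; [exact A1|split; [apply Hor_iso; exact A2|]].
    apply sig_ext. rewrite HorF_cell. exact A3.
Qed.

Lemma Horf_we : biequiv F -> biequiv (Horf HD HE (HHf F)).
Proof.
  intros [B1 [B2 B3]]. split; [|split].
  - intro b. destruct (B1 b) as [a [e [E1 [E2 E3]]]].
    exists a, e. split; [exact E1|split; [exact E2|apply Hor_eqv; exact E3]].
  - intros a a' g Hg1 Hg2. destruct (B2 a a' g Hg1 Hg2) as [f [x [F1 [F2 [X1 [X2 X3]]]]]].
    exists f, (exist _ x (glob_true x)).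
    split; [exact F1|split; [exact F2|split; [exact X1|split; [exact X2|apply Hor_iso; exact X3]]]].
  - intros f f' y Hd Hc Hy1 Hy2.
    destruct (B3 f f' (proj1_sig y) Hd Hc Hy1 Hy2) as [x [[X1 [X2 X3]] XU]].
    exists (exist _ x (glob_true x)). split; [split; [exact X1|split; [exact X2|]]|].
    + apply sig_ext. rewrite HorF_cell. exact X3.
    + intros x' E1 E2 E3. apply sig_ext. simpl. apply XU; try assumption.
      rewrite <- HorF_cell, E3. reflexivity.
Qed.
End HorF.

Theorem quillen_part (A B : TwoCat) (F : TwoFun A B) : is_twocat A -> is_twocat B -> is_twofun F ->
       (lack_fib F -> dbl_fib (HHf F)) /\
       (lack_fib F -> biequiv F -> dbl_fib (HHf F) /\ dbl_we (HHf F)).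
Proof.
  intros HA HB HF. split.
  - intros Hl HD HE. split; [apply Horf_fib; exact Hl|apply (Verf_fib HA HB HF); exact Hl].
  - intros Hl Hb. split.
    + intros HD HE. split; [apply Horf_fib; exact Hl|apply (Verf_fib HA HB HF); exact Hl].
    + intros HD HE. split; [apply Horf_we; exact Hb|apply (Verf_we HA HB HF); exact Hb].
Qed.
Theorem theorem6p4 :
  exists (L : DblCat -> TwoCat) (eta : forall D : DblCat, DblFun D (HH (L D))),
    (forall D : DblCat, is_dblcat D ->
       is_twocat (L D) /\ is_dblfun (eta D) /\
       forall (B : TwoCat) (G : DblFun D (HH B)), is_twocat B -> is_dblfun G ->
         exists G' : TwoFun (L D) B,
           (is_twofun G' /\ dblfun_eq (dblfun_comp (HHf G') (eta D)) G) /\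
           forall G'' : TwoFun (L D) B, is_twofun G'' ->
             dblfun_eq (dblfun_comp (HHf G'') (eta D)) G -> twofun_eq G'' G') /\
    (forall (A B : TwoCat) (F : TwoFun A B), is_twocat A -> is_twocat B -> is_twofun F ->
       (lack_fib F -> dbl_fib (HHf F)) /\
       (lack_fib F -> biequiv F -> dbl_fib (HHf F) /\ dbl_we (HHf F))) /\
    (forall (A : TwoCat) (eps : TwoFun (L (HH A)) A), is_twocat A -> is_twofun eps ->
       dblfun_eq (dblfun_comp (HHf eps) (eta (HH A))) (dblfun_id (HH A)) ->
       twocat_iso eps).
Proof.
  exists (fun D => LD D), (fun D => etaD D).
  split; [|split].
  - intros D _. split; [apply LD_twocat|split; [apply etaD_dblfun|]].
    intros B G HB HG. exists (Gp HB HG). split; [split; [apply Gp_twofun|apply Gp_eq]|].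
    intros G2 H1 H2. exact (@U_all D B G HB HG G2 H1 H2).
  - exact quillen_part.
  - intros A eps HA Heps Heq. exact (counit_iso HA Heps Heq).
Qed.
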